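(* The category $\mathbf{StoneLPries}$ of Stone L-spaces and L-morphisms is equivalent to the category $\mathbf{Stone}$ of Stone spaces and continuous maps, and dually equivalent to the category $\mathbf{StoneFrm}$ of Stone frames and frame homomorphisms.
   Context: A frame is a complete lattice satisfying $a\wedge\bigvee S=\bigvee\{a\wedge s\mid s\in S\}$; frame homomorphisms preserve finite meets and arbitrary joins. In a frame $L$, $a\ll b$ means whenever $b\le\bigvee S$ there is finite $T\subseteq S$ with $a\le\bigvee T$; $L$ is compact if $1\ll1$. With $a^*=\bigvee\{x\mid a\wedge x=0\}$, $a$ is complemented if $a\vee a^*=1$. A Stone frame is a compact frame in which every element is the join of the complemented elements below it. A Priestley space is a Stone space $X$ with a partial order such that clopen upsets separate points. An L-space is a Priestley space in which the downset of each clopen set is clopen and the closure of each open upset is open. ${\sf ClopUp}(X)$ is the set of clopen upsets; $\mathrm{cl}$ denotes closure. An L-morphism is a continuous order-preserving map $f:X\to X'$ between L-spaces with $f^{-1}(\mathrm{cl}\,U)=\mathrm{cl}\,f^{-1}(U)$ for every open upset $U$ of $X'$. For $U,V\in{\sf ClopUp}(X)$, $V\ll U$ means that for every open upset $W$, $U\subseteq\mathrm{cl}\,W$ implies $V\subseteq W$; $\ker U=\bigcup\{V\in{\sf ClopUp}(X)\mid V\ll U\}$; $X$ is L-compact if $X=\ker X$. A biset is a set that is both an upset and a downset; ${\sf ClopBi}(X)$ is the set of clopen bisets; $\mathrm{cen}\,U=\bigcup\{V\in{\sf ClopBi}(X)\mid V\subseteq U\}$. A Stone L-space is an L-compact L-space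 with $\mathrm{cen}\,U$ dense in $U$ for each $U\in{\sf ClopUp}(X)$. A Stone space is a compact Hausdorff zero-dimensional space. *)

(* Defs.v *)
From HB Require Import structures.
From mathcomp Require Import all_boot all_order.
From mathcomp Require Import boolp classical_sets functions cardinality topology.

Set Implicit Arguments.
Unset Strict Implicit.
Unset Printing Implicit Defensive.

Local Open Scope classical_set_scope.

Record category := Category {
  ob : Type;
  hom : ob -> ob -> Type;
  idm : forall a, hom a a;
  comp : forall a b c, hom b c -> hom a b -> hom a c;
  comp_idl : forall a b (f : hom a b), comp (idm b) f = f;
  comp_idr : forall a b (f : hom a b), comp f (idm a) = f;
  compA : forall a b c d (h : hom c d) (g : hom b c) (f : hom a b),
      comp h (comp g f) = comp (comp h g) f }.

Arguments hom : clear implicits.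
Arguments idm {_} _.
Arguments comp {_ _ _ _}.

Definition op_category (C : category) : category :=
  @Category (ob C) (fun a b => hom C b a) (@idm C)
    (fun a b c (g : hom C c b) (f : hom C b a) => comp f g)
    (fun a b f => comp_idr f) (fun a b f => comp_idl f)
    (fun a b c d h g f => esym (compA f g h)).

Record functor (C D : category) := Functor {
  fobj :> ob C -> ob D;
  fmap : forall a b, hom C a b -> hom D (fobj a) (fobj b);
  fmap_id : forall a, fmap (idm a) = idm (fobj a);
  fmap_comp : forall a b c (g : hom C b c) (f : hom C a b),
      fmap (comp g f) = comp (fmap g) (fmap f) }.

Arguments fmap {C D} _ {a b}.

Definition id_functor (C : category) : functor C C :=
  @Functor C C (fun a => a) (fun a b f => f) (fun a => erefl) (fun a b c g f => erefl).

Lemma functor_comp_id (C D E : category) (G : functor D E) (F : functor C D) (a : ob C) :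
  fmap G (fmap F (idm a)) = idm (G (F a)).
Proof. by rewrite fmap_id fmap_id. Qed.

Lemma functor_comp_comp (C D E : category) (G : functor D E) (F : functor C D)
  (a b c : ob C) (g : hom C b c) (f : hom C a b) :
  fmap G (fmap F (comp g f)) = comp (fmap G (fmap F g)) (fmap G (fmap F f)).
Proof. by rewrite fmap_comp fmap_comp. Qed.

Definition comp_functor (C D E : category) (G : functor D E) (F : functor C D) :
  functor C E :=
  @Functor C E (fun a => G (F a)) (fun a b f => fmap G (fmap F f))
    (@functor_comp_id C D E G F) (@functor_comp_comp C D E G F).

Definition nat_iso (C D : category) (F G : functor C D) : Prop :=
  exists (alpha : forall a, hom D (F a) (G a)) (beta : forall a, hom D (G a) (F a)),
    [/\ forall a, comp (beta a) (alpha a) = idm (F a),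
        forall a, comp (alpha a) (beta a) = idm (G a) &
        forall a b (f : hom C a b), comp (fmap G f) (alpha a) = comp (alpha b) (fmap F f)].

Definition equivalent (C D : category) : Prop :=
  exists (F : functor C D) (G : functor D C),
    nat_iso (id_functor C) (comp_functor G F) /\
    nat_iso (comp_functor F G) (id_functor D).

Definition dually_equivalent (C D : category) : Prop :=
  equivalent C (op_category D).

Lemma sig_eq (A : Type) (P : A -> Prop) (x y : {a : A | P a}) :
  proj1_sig x = proj1_sig y -> x = y.
Proof.
destruct x as [a pa], y as [b pb]; simpl => eab; subst b.
by rewrite (Prop_irrelevance pa pb).
Qed.

Definition stone_space (X : topologicalType) : Prop :=
  [/\ compact [set: X], hausdorff_space X & zero_dimensional X].

Definition stone_ob := {X : topologicalType | stone_space X}.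

Definition cont_hom (X Y : topologicalType) := {f : X -> Y | continuous f}.

Lemma cont_id (X : topologicalType) : continuous (@id X).
Proof. by move=> x. Qed.

Lemma cont_comp (X Y Z : topologicalType) (g : Y -> Z) (f : X -> Y) :
  continuous g -> continuous f -> continuous (g \o f).
Proof. by move=> cg cf x; apply: continuous_comp; [apply: cf | apply: cg]. Qed.

Definition Stone : category.
Proof.
refine (@Category stone_ob (fun X Y => cont_hom (proj1_sig X) (proj1_sig Y))
  (fun X => exist _ id (@cont_id _))
  (fun X Y Z g f => exist _ (proj1_sig g \o proj1_sig f)
       (cont_comp (proj2_sig g) (proj2_sig f))) _ _ _).
- by move=> a b f; apply: sig_eq.
- by move=> a b f; apply: sig_eq.
- by move=> a b c d h g f; apply: sig_eq.
Defined.

Record ordtop := OrdTop {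
  otop :> topologicalType;
  ole : otop -> otop -> Prop }.

Definition partial_order (T : Type) (r : T -> T -> Prop) : Prop :=
  [/\ forall x, r x x,
      forall x y, r x y -> r y x -> x = y &
      forall x y z, r x y -> r y z -> r x z].

Definition upset (X : ordtop) (U : set X) : Prop :=
  forall x y, U x -> ole x y -> U y.
Definition downset (X : ordtop) (U : set X) : Prop :=
  forall x y, U y -> ole x y -> U x.
Definition biset (X : ordtop) (U : set X) : Prop := upset U /\ downset U.

Definition down (X : ordtop) (A : set X) : set X :=
  [set x | exists2 y, A y & ole x y].

Definition clopup (X : ordtop) (U : set X) : Prop := clopen U /\ upset U.

Definition priestley_space (X : ordtop) : Prop :=
  [/\ stone_space X, partial_order (@ole X) &
      forall x y : X, ~ ole x y -> exists U : set X, [/\ clopup U, U x & ~ U y]].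

Definition L_space (X : ordtop) : Prop :=
  [/\ priestley_space X,
      forall A : set X, clopen A -> clopen (down A) &
      forall U : set X, open U -> upset U -> open (closure U)].

Definition Lway_below (X : ordtop) (V U : set X) : Prop :=
  forall W : set X, open W -> upset W -> U `<=` closure W -> V `<=` W.

Definition Lker (X : ordtop) (U : set X) : set X :=
  [set x | exists V : set X, [/\ clopup V, Lway_below V U & V x]].

Definition L_compact (X : ordtop) : Prop := [set: X] = Lker [set: X].

Definition cen (X : ordtop) (U : set X) : set X :=
  [set x | exists V : set X, [/\ clopen V, biset V, V `<=` U & V x]].

Definition stone_L_space (X : ordtop) : Prop :=
  [/\ L_space X, L_compact X &
      forall U : set X, clopup U -> U `<=` closure (cen U)].

Definition L_morphism (X Y : ordtop) (f : X -> Y) : Prop :=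
  [/\ continuous f,
      (forall x y, ole x y -> ole (f x) (f y)) &
      forall U : set Y, open U -> upset U ->
        f @^-1` (closure U) = closure (f @^-1` U)].

Lemma L_morphism_id (X : ordtop) : L_morphism (@id X).
Proof. by split=> // x. Qed.

Lemma L_morphism_comp (X Y Z : ordtop) (g : Y -> Z) (f : X -> Y) :
  L_morphism g -> L_morphism f -> L_morphism (g \o f).
Proof.
move=> [cg mg clg] [cf mf clf]; split.
- exact: cont_comp.
- by move=> x y xy; apply/mg/mf.
- move=> U oU uU; rewrite comp_preimage clg // clf //.
  + by apply: open_comp => // x _; apply: cg.
  + by move=> x y Ux xy; apply: uU Ux (mg _ _ xy).
Qed.

Definition stoneL_ob := {X : ordtop | stone_L_space X}.

Definition StoneLPries : category.
Proof.
refine (@Category stoneL_ob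
  (fun X Y => {f : proj1_sig X -> proj1_sig Y | L_morphism f})
  (fun X => exist _ id (@L_morphism_id _))
  (fun X Y Z g f => exist _ (proj1_sig g \o proj1_sig f)
       (L_morphism_comp (proj2_sig g) (proj2_sig f))) _ _ _).
- by move=> a b f; apply: sig_eq.
- by move=> a b f; apply: sig_eq.
- by move=> a b c d h g f; apply: sig_eq.
Defined.

Record frame := Frame {
  fcar :> Type;
  fle : fcar -> fcar -> Prop;
  fsup : set fcar -> fcar;
  fmeet : fcar -> fcar -> fcar;
  fle_po : partial_order fle;
  fsup_ub : forall (S : set fcar) a, S a -> fle a (fsup S);
  fsup_least : forall (S : set fcar) b, (forall a, S a -> fle a b) -> fle (fsup S) b;
  fmeet_glb : forall a b c, fle c (fmeet a b) <-> (fle c a /\ fle c b);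
  fdistr : forall a (S : set fcar), fmeet a (fsup S) = fsup [set fmeet a s | s in S] }.

Arguments fle {f}.
Arguments fsup {f}.
Arguments fmeet {f}.

Definition ftop (L : frame) : L := fsup [set: L].
Definition fbot (L : frame) : L := fsup (@set0 L).
Definition fjoin (L : frame) (a b : L) : L := fsup [set a; b].

Definition fway_below (L : frame) (a b : L) : Prop :=
  forall S : set L, fle b (fsup S) ->
    exists T : set L, [/\ finite_set T, T `<=` S & fle a (fsup T)].

Definition compact_frame (L : frame) : Prop := fway_below (ftop L) (ftop L).

Definition pseudocompl (L : frame) (a : L) : L :=
  fsup [set x | fmeet a x = fbot L].

Definition complemented (L : frame) (a : L) : Prop :=
  fjoin a (pseudocompl a) = ftop L.

Definition stone_frame (L : frame) : Prop :=
  compact_frame L /\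
  forall a : L, a = fsup [set c | complemented c /\ fle c a].

Definition frame_hom (L M : frame) (h : L -> M) : Prop :=
  [/\ h (ftop L) = ftop M,
      forall a b, h (fmeet a b) = fmeet (h a) (h b) &
      forall S : set L, h (fsup S) = fsup (h @` S)].

Lemma frame_hom_id (L : frame) : frame_hom (@id L).
Proof. by split=> // S; rewrite image_id. Qed.

Lemma frame_hom_comp (L M N : frame) (g : M -> N) (f : L -> M) :
  frame_hom g -> frame_hom f -> frame_hom (g \o f).
Proof.
move=> [g1 gm gs] [f1 fm fs]; split => /=.
- by rewrite f1 g1.
- by move=> a b; rewrite fm gm.
- by move=> S; rewrite fs gs image_comp.
Qed.

Definition stonefrm_ob := {L : frame | stone_frame L}.

Definition StoneFrm : category.
Proof.
refine (@Category stonefrm_ob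
  (fun L M => {h : proj1_sig L -> proj1_sig M | frame_hom h})
  (fun L => exist _ id (@frame_hom_id _))
  (fun L M N g f => exist _ (proj1_sig g \o proj1_sig f)
       (frame_hom_comp (proj2_sig g) (proj2_sig f))) _ _ _).
- by move=> a b f; apply: sig_eq.
- by move=> a b f; apply: sig_eq.
- by move=> a b c d h g f; apply: sig_eq.
Defined.

(* Main.v *)
Require Import Defs.
From HB Require Import structures.
From mathcomp Require Import all_boot all_order.
From mathcomp Require Import boolp classical_sets functions cardinality topology.
Set Implicit Arguments.
Unset Strict Implicit.
Unset Printing Implicit Defensive.
Local Open Scope classical_set_scope.
Notation "g \oc f" := (Defs.comp g f) (at level 40, left associativity).
Notation cA := Defs.compA.
Notation cidl := Defs.comp_idl.
Notation cidr := Defs.comp_idr.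
Notation Fmap := Defs.fmap.
Notation Fmap_comp := Defs.fmap_comp.
Notation Fmap_id := Defs.fmap_id.
Section CatLemmas.

Lemma nat_iso_sym (C D : category) (F G : functor C D) : nat_iso F G -> nat_iso G F.
Proof.
move=> [al [be [h1 h2 h3]]]; exists be, al; split => // a b f.
have := h3 a b f => /(congr1 (fun k => be b \oc (k \oc be a))).
by rewrite !cA h1 cidl -!cA h2 cidr => ->.
Qed.

Lemma nat_iso_trans (C D : category) (F G H : functor C D) :
  nat_iso F G -> nat_iso G H -> nat_iso F H.
Proof.
move=> [al [be [h1 h2 h3]]] [al' [be' [h1' h2' h3']]].
exists (fun a => al' a \oc al a), (fun a => be a \oc be' a); split.
- by move=> a; rewrite -cA (cA (be' a)) h1' cidl h1.
- by move=> a; rewrite -cA (cA (al a)) h2 cidl h2'.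
- by move=> a b f; rewrite cA h3' -cA h3 cA.
Qed.

Lemma nat_iso_whl (C D E : category) (K : functor D E) (F G : functor C D) :
  nat_iso F G -> nat_iso (comp_functor K F) (comp_functor K G).
Proof.
move=> [al [be [h1 h2 h3]]].
exists (fun a => Fmap K (al a)), (fun a => Fmap K (be a)); split => /=.
- by move=> a; rewrite -Fmap_comp h1 Fmap_id.
- by move=> a; rewrite -Fmap_comp h2 Fmap_id.
- by move=> a b f; rewrite -!Fmap_comp h3.
Qed.

Lemma nat_iso_whr (B C D : category) (K : functor B C) (F G : functor C D) :
  nat_iso F G -> nat_iso (comp_functor F K) (comp_functor G K).
Proof.
move=> [al [be [h1 h2 h3]]].
exists (fun a => al (K a)), (fun a => be (K a)); split => //= a b f.
Qed.

Lemma nat_iso_refl (C D : category) (F : functor C D) : nat_iso F F.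
Proof.
exists (fun a => idm (F a)), (fun a => idm (F a)); split => //.
- by move=> a; rewrite cidl.
- by move=> a; rewrite cidl.
- by move=> a b f; rewrite cidl cidr.
Qed.

Lemma equiv_sym (C D : category) : equivalent C D -> equivalent D C.
Proof.
move=> [F [G [h1 h2]]]; exists G, F; split; exact: nat_iso_sym.
Qed.

Lemma equiv_trans (C D E : category) : equivalent C D -> equivalent D E -> equivalent C E.
Proof.
move=> [F [G [h1 h2]]] [F' [G' [h1' h2']]].
exists (comp_functor F' F), (comp_functor G G'); split.
- apply: (nat_iso_trans h1).
  have := nat_iso_whr F (nat_iso_whl G h1').
  exact.
- apply: nat_iso_trans h2'.
  have := nat_iso_whr G' (nat_iso_whl F' h2).
  exact.
Qed.

End CatLemmas.
Section FFES.
Variables (C D : category) (F : functor C D).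
Hypothesis faithful : forall a b (f f' : hom C a b), Fmap F f = Fmap F f' -> f = f'.
Hypothesis full : forall a b (g : hom D (F a) (F b)), exists f, Fmap F f = g.
Hypothesis esurj : forall d, exists c (u : hom D (F c) d) (v : hom D d (F c)),
  v \oc u = idm (F c) /\ u \oc v = idm d.

Let es' d : {c : ob C & {u : hom D (F c) d & {v : hom D d (F c) |
  v \oc u = idm (F c) /\ u \oc v = idm d}}}.
Proof.
have /cid [c H] := esurj d; exists c.
have /cid [u H'] := H; exists u.
by have /cid [v H''] := H'; exists v.
Qed.

Let pre a b (g : hom D (F a) (F b)) : hom C a b := proj1_sig (cid (full g)).
Let preP a b (g : hom D (F a) (F b)) : Fmap F (pre g) = g.
Proof. exact: proj2_sig (cid (full g)). Qed.

Let G0 d := projT1 (es' d).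
Let u d : hom D (F (G0 d)) d := projT1 (projT2 (es' d)).
Let v d : hom D d (F (G0 d)) := proj1_sig (projT2 (projT2 (es' d))).
Let vu d : v d \oc u d = idm _. Proof. exact: (proj2_sig (projT2 (projT2 (es' d)))).1. Qed.
Let uv d : u d \oc v d = idm _. Proof. exact: (proj2_sig (projT2 (projT2 (es' d)))).2. Qed.

Let Gm d d' (g : hom D d d') : hom C (G0 d) (G0 d') := pre (v d' \oc (g \oc u d)).

Let Gm_id d : Gm (idm d) = idm (G0 d).
Proof. by apply: faithful; rewrite preP Fmap_id cidl vu. Qed.

Let Gm_comp d1 d2 d3 (g : hom D d2 d3) (f : hom D d1 d2) :
  Gm (g \oc f) = Gm g \oc Gm f.
Proof.
apply: faithful; rewrite Fmap_comp !preP.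
by rewrite !cA -(cA _ (u d2)) uv cidr -!cA.
Qed.

Definition Gfun : functor D C := @Functor D C G0 Gm Gm_id Gm_comp.

Lemma ff_es_equiv : equivalent C D.
Proof.
exists F, Gfun; split.
- exists (fun a => pre (v (F a))), (fun a => pre (u (F a))); split.
  + by move=> a; apply: faithful; rewrite Fmap_comp !preP Fmap_id uv.
  + by move=> a; apply: faithful; rewrite Fmap_comp !preP Fmap_id vu.
  + move=> a b f /=; apply: faithful; rewrite !Fmap_comp !preP.
    by rewrite -!cA uv cidr.
- exists (fun d => u d), (fun d => v d); split => // a b g /=.
  by rewrite /Gm preP cA uv cidl.
Qed.

End FFES.
Lemma compact_dir (X : topologicalType) (K : set X) (Fm : set (set X)) :
  compact K -> (forall U, Fm U -> open U) -> (exists U, Fm U) ->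
  (forall U V, Fm U -> Fm V -> exists W, Fm W /\ U `|` V `<=` W) ->
  K `<=` \bigcup_(U in Fm) U -> exists U, Fm U /\ K `<=` U.
Proof.
move=> cK oF [U0 FU0] dir cov; apply: contrapT => nK.
pose F := [set A | exists U, Fm U /\ K `\` U `<=` A].
have PF : ProperFilter F.
  apply: Build_ProperFilter_ex.
    move=> A [U [FU sA]]; apply: contrapT => /forallNP hA.
    apply: nK; exists U; split => // x Kx; apply: contrapT => Ux.
    by apply: (hA x); apply: sA.
  split.
  - by exists U0; split.
  - move=> A B [U [FU sA]] [V [FV sB]].
    have [W [FW sW]] := dir U V FU FV.
    exists W; split => // x [Kx nWx]; split.
      by apply: sA; split => // ?; apply: nWx; apply: sW; left.
    by apply: sB; split => // ?; apply: nWx; apply: sW; right.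
  - by move=> A B sAB [U [FU sA]]; exists U; split => //; apply: subset_trans sAB.
have [x [Kx clx]] := cK F PF (ex_intro _ U0 (conj FU0 (fun x h => proj1 h))).
have [U FU Ux] := cov x Kx.
have [y [[_ nUy] Uy]] := clx (K `\` U) U (ex_intro _ U (conj FU (fun z h => h))) (open_nbhs_nbhs (conj (oF U FU) Ux)).
by [].
Qed.
Lemma open_loc (X : topologicalType) (A : set X) :
  (forall x, A x -> exists U, [/\ open U, U x & U `<=` A]) -> open A.
Proof.
move=> h; have -> : A = \bigcup_(U in [set U | open U /\ U `<=` A]) U.
  apply/seteqP; split => [x Ax|x [U [_ sU] Ux]]; last exact: sU.
  by have [U [oU Ux sU]] := h x Ax; exists U.
by apply: bigcup_open => U [].
Qed.

Lemma clopenC (X : topologicalType) (U : set X) : clopen U -> clopen (~` U).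
Proof. by move=> [oU cU]; split; [exact: closed_openC|exact: open_closedC]. Qed.

Lemma clopenI (X : topologicalType) (U V : set X) : clopen U -> clopen V -> clopen (U `&` V).
Proof. by move=> [oU cU] [oV cV]; split; [exact: openI|exact: closedI]. Qed.

Lemma clopenU (X : topologicalType) (U V : set X) : clopen U -> clopen V -> clopen (U `|` V).
Proof. by move=> [oU cU] [oV cV]; split; [exact: openU|exact: closedU]. Qed.

Lemma clopenT (X : topologicalType) : clopen [set: X].
Proof. by split; [exact: openT|exact: closedT]. Qed.

Lemma clopen0 (X : topologicalType) : clopen (@set0 X).
Proof. by split; [exact: open0|exact: closed0]. Qed.

Lemma compact_closed_sub (X : topologicalType) (A : set X) :
  compact [set: X] -> closed A -> compact A.
Proof. by move=> cX cA; apply: (subclosed_compact cA cX). Qed.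

Lemma stone_clopen_base (X : topologicalType) : stone_space X ->
  forall (N : set X) x, open N -> N x -> exists C, [/\ clopen C, C x & C `<=` N].
Proof.
move=> [cX hX zX] N x oN Nx.
have := @compact_dir X (~` N) [set V | exists C, [/\ clopen C, C x & V = ~` C]].
case.
- exact: compact_closed_sub (open_closedC oN).
- by move=> U [C [cC _ ->]]; apply: closed_openC; case: cC.
- by exists (~` setT), setT; split => //; exact: clopenT.
- move=> _ _ [C1 [c1 x1 ->]] [C2 [c2 x2 ->]]; exists (~` (C1 `&` C2)); split.
    by exists (C1 `&` C2); split => //; exact: clopenI.
  by move=> z [nz|nz] [] //.
- move=> z nNz; have xz : x != z by apply/eqP => exz; apply: nNz; rewrite -exz.
  have [U [cU Ux nUz]] := zX x z xz.
  by exists (~` U) => //; exists U.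
- move=> _ [[C [cC Cx ->]] sC]; exists C; split => // c Cc.
  by apply: contrapT => nNc; have := sC c nNc.
Qed.
Lemma finite_ind (T : Type) (P : set T -> Prop) : P set0 ->
  (forall A x, finite_set A -> P A -> P (x |` A)) -> forall A, finite_set A -> P A.
Proof.
move=> P0 PS A fA.
have [s ->] := (@finite_seqP {classic T} A).1 fA.
elim: s => [|a s IH].
  by have -> : [set` [::]] = @set0 {classic T} by apply/seteqP; split.
have -> : [set` a :: s] = a |` [set` s].
  apply/seteqP; split => x /=; rewrite in_cons.
    by move=> /orP [/eqP ->|h]; [left|right].
  by case => [->|h]; apply/orP; [left|right].
by apply: PS => //; apply: (@finite_seq {classic T} s).
Qed.
Notation "a ⊑ b" := (fle a b) (at level 70).
Notation "a ⊓ b" := (fmeet a b) (at level 40, left associativity).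

Section FrameBasics.
Variable L : frame.
Implicit Types (a b c d x y : L) (S T : set L).

Lemma le_refl a : a ⊑ a. Proof. by case: (fle_po L). Qed.
Lemma le_anti a b : a ⊑ b -> b ⊑ a -> a = b. Proof. by case: (fle_po L) => _ h _; apply: h. Qed.
Lemma le_trans a b c : a ⊑ b -> b ⊑ c -> a ⊑ c. Proof. by case: (fle_po L) => _ _ h; apply: h. Qed.
Lemma meet_l a b : a ⊓ b ⊑ a. Proof. by have /(fmeet_glb a b) [] := le_refl (a ⊓ b). Qed.
Lemma meet_r a b : a ⊓ b ⊑ b. Proof. by have /(fmeet_glb a b) [] := le_refl (a ⊓ b). Qed.
Lemma meet_glb' c a b : c ⊑ a -> c ⊑ b -> c ⊑ a ⊓ b. Proof. by move=> h1 h2; apply/fmeet_glb. Qed.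
Lemma top_ub a : a ⊑ ftop L. Proof. exact: fsup_ub. Qed.
Lemma bot_lb a : fbot L ⊑ a. Proof. by apply: fsup_least. Qed.
Lemma sup_mono S T : S `<=` T -> fsup S ⊑ fsup T.
Proof. by move=> sST; apply: fsup_least => a /sST; apply: fsup_ub. Qed.
Lemma le_sup a S : (exists2 s, S s & a ⊑ s) -> a ⊑ fsup S.
Proof. by move=> [s Ss h]; apply: le_trans h (fsup_ub Ss). Qed.
Lemma join_l a b : a ⊑ fjoin a b. Proof. by apply: fsup_ub; left. Qed.
Lemma join_r a b : b ⊑ fjoin a b. Proof. by apply: fsup_ub; right. Qed.
Lemma join_least a b c : a ⊑ c -> b ⊑ c -> fjoin a b ⊑ c.
Proof. by move=> h1 h2; apply: fsup_least => x [->|->]. Qed.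
Lemma meet_mono a b a' b' : a ⊑ a' -> b ⊑ b' -> a ⊓ b ⊑ a' ⊓ b'.
Proof.
move=> h1 h2; apply: meet_glb'; [exact: le_trans (meet_l _ _) h1|exact: le_trans (meet_r _ _) h2].
Qed.
Lemma meetC a b : a ⊓ b = b ⊓ a.
Proof. by apply: le_anti; apply: meet_glb'; [apply: meet_r|apply: meet_l|apply: meet_r|apply: meet_l]. Qed.
Lemma meet_top a : a ⊓ ftop L = a.
Proof. by apply: le_anti; [apply: meet_l|apply: meet_glb'; [apply: le_refl|apply: top_ub]]. Qed.
Lemma meet_sup_le a S b : (forall s, S s -> a ⊓ s ⊑ b) -> a ⊓ fsup S ⊑ b.
Proof. by move=> h; rewrite fdistr; apply: fsup_least => _ [s Ss <-]; apply: h. Qed.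
Lemma meet_join_le a x y b : a ⊓ x ⊑ b -> a ⊓ y ⊑ b -> a ⊓ fjoin x y ⊑ b.
Proof. by move=> h1 h2; apply: meet_sup_le => s [->|->]. Qed.
Lemma le_meet_eq a b : a ⊑ b -> a ⊓ b = a.
Proof. by move=> h; apply: le_anti; [apply: meet_l|apply: meet_glb' => //; apply: le_refl]. Qed.
Lemma le_bot a : a ⊑ fbot L -> a = fbot L.
Proof. by move=> h; apply: le_anti => //; apply: bot_lb. Qed.
Lemma sup_set0 : fsup (@set0 L) = fbot L. Proof. by []. Qed.

Lemma meet_pc a : a ⊓ pseudocompl a = fbot L.
Proof. by apply: le_bot; apply: meet_sup_le => s ->; apply: le_refl. Qed.
Lemma pc_ub a x : a ⊓ x = fbot L -> x ⊑ pseudocompl a.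
Proof. by move=> h; apply: fsup_ub. Qed.

Lemma compl_top : complemented (ftop L).
Proof. by apply: le_anti; [apply: top_ub|apply: join_l]. Qed.

Lemma compl_meet c d : complemented c -> complemented d -> complemented (c ⊓ d).
Proof.
rewrite /complemented => hc hd; apply: le_anti; first exact: top_ub.
have pc1 : pseudocompl c ⊑ pseudocompl (c ⊓ d).
  apply: pc_ub; apply: le_bot; apply: le_trans (meet_mono (meet_l c d) (le_refl _)) _.
  by rewrite meet_pc; apply: le_refl.
have pc2 : pseudocompl d ⊑ pseudocompl (c ⊓ d).
  apply: pc_ub; apply: le_bot; apply: le_trans (meet_mono (meet_r c d) (le_refl _)) _.
  by rewrite meet_pc; apply: le_refl.
rewrite -{1}hc; apply: join_least; last exact: le_trans pc1 (join_r _ _).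
have e : c ⊑ c ⊓ fjoin d (pseudocompl d) by rewrite hd meet_top; apply: le_refl.
apply: le_trans e _; apply: meet_join_le; first exact: join_l.
exact: le_trans (meet_r _ _) (le_trans pc2 (join_r _ _)).
Qed.

Lemma compl_compact c S : compact_frame L -> complemented c -> c ⊑ fsup S ->
  exists T, [/\ finite_set T, T `<=` S & c ⊑ fsup T].
Proof.
move=> cL hc cS.
have : ftop L ⊑ fsup (S `|` [set pseudocompl c]).
  rewrite -hc; apply: join_least.
    by apply: le_trans cS (sup_mono _) => x Sx; left.
  by apply: fsup_ub; right.
move=> /cL [T0 [fT0 sT0 tT0]].
exists (T0 `\` [set pseudocompl c]); split.
- exact: finite_setD.
- by move=> x [/sT0 [//|->] /=].
- have e : c ⊑ c ⊓ ftop L by rewrite meet_top; apply: le_refl.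
  apply: le_trans e _; apply: le_trans (meet_mono (le_refl c) tT0) _.
  apply: meet_sup_le => t T0t.
  have [->|ne] := pselect (t = pseudocompl c).
    by rewrite meet_pc; apply: bot_lb.
  by apply: le_trans (meet_r _ _) _; apply: fsup_ub; split.
Qed.

End FrameBasics.
Section Filters.
Variable L : frame.
Implicit Types (a b c d x y : L) (S T : set L) (p q F : set L).

Definition filt p := [/\ p (ftop L), (forall a b, p a -> a ⊑ b -> p b) &
  (forall a b, p a -> p b -> p (a ⊓ b))].
Definition pfilt p := [/\ filt p, ~ p (fbot L) & forall a b, p (fjoin a b) -> p a \/ p b].
Definition cpfilt p := filt p /\ forall S, p (fsup S) -> exists2 s, S s & p s.

Lemma sup_U1 x A : fsup (x |` A) ⊑ fjoin x (fsup A).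
Proof.
apply: fsup_least => y [->|Ay]; first exact: join_l.
exact: le_trans (fsup_ub Ay) (join_r _ _).
Qed.

Lemma pfilt_fin p : pfilt p -> forall T, finite_set T -> p (fsup T) -> exists2 t, T t & p t.
Proof.
move=> [[pt pu pm] pb pj]; apply: finite_ind.
  by move=> h; exfalso; apply: pb.
move=> A x _ IH /pu /(_ (sup_U1 x A)) /pj [px|/IH [t At pt']].
  by exists x => //; left.
by exists t => //; right.
Qed.

Lemma cpfilt_pfilt p : cpfilt p -> pfilt p.
Proof.
move=> [fp cp]; split => //.
  by move=> /cp [].
by move=> a b /cp [s [->|->] ps]; [left|right].
Qed.

Lemma PFT F b : filt F -> ~ F b -> exists p, [/\ pfilt p, F `<=` p & ~ p b].
Proof.
move=> [Ft Fu Fm] nFb.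
pose P := [set G : set L | filt (G `|` F) /\ ~ (G `|` F) b].
have [M [[[Mt Mu Mm] nMb] maxM]] : exists M, P M /\ forall B, M `<` B -> ~ P B.
  apply: Zorn_bigcup => Fam sFP tot; split; last first.
    move=> [[G FG Gb]|//]; have [_] := sFP G FG; apply; by left.
  split; first by right.
  - move=> a c [[G FG Ga]|Fa] ac.
      have [[_ Gu _] _] := sFP G FG; have [Gc|Fc] := Gu a c (or_introl Ga) ac; last by right.
      by left; exists G.
    by right; apply: Fu ac.
  - move=> a c [[G FG Ga]|Fa] [[H FH Hc]|Fc].
    + have [GH|HG] := tot G H FG FH.
        have [[_ _ Hm] _] := sFP H FH; have [|] := Hm a c (or_introl (GH a Ga)) (or_introl Hc).
          by move=> ?; left; exists H.
        by right.
      have [[_ _ Gm] _] := sFP G FG; have [|] := Gm a c (or_introl Ga) (or_introl (HG c Hc)).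
        by move=> ?; left; exists G.
      by right.
    + have [[_ _ Gm] _] := sFP G FG; have [|] := Gm a c (or_introl Ga) (or_intror Fc).
        by move=> ?; left; exists G.
      by right.
    + have [[_ _ Hm] _] := sFP H FH; have [|] := Hm a c (or_intror Fa) (or_introl Hc).
        by move=> ?; left; exists H.
      by right.
    + by right; apply: Fm.
set N := M `|` F.
have FN : F `<=` N by move=> x; right.
have NF : N `|` F = N by apply/seteqP; split => x; [case => //; right|left].
have maxN : forall B, N `<` B -> ~ P B.
  move=> B [NB nBN] PB.
  have MN : M `<=` N by move=> x; left.
  by apply: (maxM B) => //; split; [apply: subset_trans NB|move=> BM; apply: nBN => x /BM; left].
exists N; split => //.
split => //.
- by move=> Nbot; apply: nMb; apply: Mu Nbot (bot_lb b).
- move=> x y Nxy; apply: contrapT => /not_orP [nx ny].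
  have ext : forall z, ~ N z -> exists2 m, N m & m ⊓ z ⊑ b.
    move=> z nz; pose Nz := [set w | exists2 m, N m & m ⊓ z ⊑ w].
    apply: contrapT => hz.
    have NNz : N `<=` Nz by move=> m Nm; exists m => //; apply: meet_l.
    have Nzz : Nz z by exists (ftop L); [exact: Mt|apply: meet_r].
    apply: (maxN Nz); first by split => // /(_ z Nzz).
    rewrite /P /=.
    have -> : Nz `|` F = Nz by apply/seteqP; split => w; [case => // /FN /NNz|left].
    split; last by move=> [/hz|/FN /NNz /hz].
    split.
    + exact: NNz _ Mt.
    + by move=> w w' [m Nm h] ww'; exists m => //; apply: le_trans ww'.
    + move=> w w' [m Nm h] [m' Nm' h']; exists (m ⊓ m'); first exact: Mm.
      apply: meet_glb'.
        by apply: le_trans h; apply: meet_mono; [apply: meet_l|apply: le_refl].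
      by apply: le_trans h'; apply: meet_mono; [apply: meet_r|apply: le_refl].
  have [m1 N1 h1] := ext x nx; have [m2 N2 h2] := ext y ny.
  apply: nMb; apply: (Mu ((m1 ⊓ m2) ⊓ fjoin x y)); first exact: Mm (Mm _ _ N1 N2) Nxy.
  apply: meet_join_le.
    by apply: le_trans h1; apply: meet_mono; [apply: meet_l|apply: le_refl].
  by apply: le_trans h2; apply: meet_mono; [apply: meet_r|apply: le_refl].
Qed.

End Filters.
Section MoreFrame.
Variable L : frame.
Implicit Types (a b c d x y : L) (S T : set L) (p q F : set L).

Definition upc a := [set x | a ⊑ x].
Lemma filt_upc a : filt (upc a).
Proof. split; [exact: top_ub|move=> x y h1 h2; exact: le_trans h1 h2|by move=> x y h1 h2; apply: meet_glb']. Qed.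

Lemma prime_sep a b : ~ (a ⊑ b) -> exists p, [/\ pfilt p, p a & ~ p b].
Proof.
move=> nab; have [p [pp sp npb]] := PFT (filt_upc a) nab.
by exists p; split => //; apply: sp; apply: le_refl.
Qed.

Definition fimp a b := fsup [set x | x ⊓ a ⊑ b].
Lemma fimp_le a b : a ⊓ fimp a b ⊑ b.
Proof. by apply: meet_sup_le => s; rewrite meetC. Qed.
Lemma fimp_ub a b x : x ⊓ a ⊑ b -> x ⊑ fimp a b.
Proof. by move=> h; apply: fsup_ub. Qed.

Lemma filt_le p a b : filt p -> p a -> a ⊑ b -> p b.
Proof. by case=> _ h _; apply: h. Qed.
Lemma filt_meet p a b : filt p -> p a -> p b -> p (a ⊓ b).
Proof. by case=> _ _ h; apply: h. Qed.
Lemma filt_top p : filt p -> p (ftop L).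
Proof. by case. Qed.
Lemma pfilt_filt p : pfilt p -> filt p. Proof. by case. Qed.
Lemma pfilt_bot p : pfilt p -> ~ p (fbot L). Proof. by case. Qed.
Lemma pfilt_join p a b : pfilt p -> p (fjoin a b) -> p a \/ p b. Proof. by case=> _ _; apply. Qed.
Lemma cpfilt_filt p : cpfilt p -> filt p. Proof. by case. Qed.
Lemma cpfilt_sup p S : cpfilt p -> p (fsup S) -> exists2 s, S s & p s. Proof. by case=> _; apply. Qed.

Lemma pfilt_meetE p a b : pfilt p -> p (a ⊓ b) <-> p a /\ p b.
Proof.
move=> pp; split; last by case; apply: filt_meet; case: pp.
by move=> h; split; apply: filt_le h _; [case: pp| exact: meet_l|case: pp|exact: meet_r].
Qed.

Lemma pfilt_joinE p a b : pfilt p -> p (fjoin a b) <-> p a \/ p b.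
Proof.
move=> pp; split; first exact: pfilt_join.
by case=> h; apply: filt_le h _; [case: pp|exact: join_l|case: pp|exact: join_r].
Qed.

Lemma pfilt_compl p c : pfilt p -> complemented c -> p c \/ p (pseudocompl c).
Proof. by move=> pp hc; apply: pfilt_join => //; rewrite hc; apply: filt_top; case: pp. Qed.

Lemma pfilt_compl_not p c : pfilt p -> p c -> ~ p (pseudocompl c).
Proof.
move=> pp pc pc'; apply: (pfilt_bot pp); rewrite -(meet_pc c).
by apply: filt_meet => //; case: pp.
Qed.

End MoreFrame.

Section StoneFrameLemmas.
Variable L : frame.
Hypothesis sL : stone_frame L.
Implicit Types (a b c d x y : L) (S T : set L) (p q F : set L).

Definition cpart p := [set x | exists2 c, complemented c /\ p c & c ⊑ x].

Lemma cpart_sub p : filt p -> cpart p `<=` p.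
Proof. by move=> fp x [c [_ pc] cx]; apply: filt_le cx. Qed.

Lemma sup_compl_below S :
  fsup S ⊑ fsup [set e | complemented e /\ exists2 s, S s & e ⊑ s].
Proof.
apply: fsup_least => s Ss; rewrite (sL.2 s); apply: sup_mono => e [ce es].
by split => //; exists s.
Qed.

Lemma cpart_cp p : pfilt p -> cpfilt (cpart p).
Proof.
move=> pp; have fp := pfilt_filt pp; split; first split.
- by exists (ftop L); [split; [exact: compl_top|exact: filt_top]|exact: le_refl].
- by move=> a b [c hc ca] ab; exists c => //; apply: le_trans ab.
- move=> a b [c [cc pc] ca] [d [cd pd] db]; exists (c ⊓ d).
    by split; [exact: compl_meet|exact: filt_meet].
  exact: meet_mono.
- move=> S [c [cc pc] cS].
  have [T [fT sT cT]] := compl_compact sL.1 cc (le_trans cS (sup_compl_below S)).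
  have [t Tt pt] := pfilt_fin pp fT (filt_le fp pc cT).
  have [ct [s Ss ts]] := sT t Tt.
  by exists s => //; exists t.
Qed.

Lemma spatial a b : ~ (a ⊑ b) -> exists p, [/\ cpfilt p, p a & ~ p b].
Proof.
move=> nab.
have [c [cc ca] ncb] : exists2 c, complemented c /\ c ⊑ a & ~ (c ⊑ b).
  apply: contrapT => h; apply: nab; rewrite (sL.2 a); apply: fsup_least => c hc.
  by apply: contrapT => ncb; apply: h; exists c.
have [p [pp sp npb]] := PFT (filt_upc c) ncb.
exists (cpart p); split.
- exact: cpart_cp.
- by exists c => //; split => //; apply: sp; apply: le_refl.
- by move=> /(cpart_sub (pfilt_filt pp)).
Qed.

End StoneFrameLemmas.
Section FrameHom.
Variables (L M : frame).
Lemma frame_hom_inv (h : L -> M) (g : M -> L) :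
  frame_hom h -> cancel h g -> cancel g h -> frame_hom g.
Proof.
move=> [h1 hm hs] hg gh; split.
- by rewrite -h1 hg.
- by move=> a b; rewrite -{1}(gh a) -{1}(gh b) -hm hg.
- move=> S; have eS : h @` (g @` S) = S.
    apply/seteqP; split => [_ [_ [x Sx <-] <-]|x Sx]; first by rewrite gh.
    by exists (g x); [exists x|rewrite gh].
  by rewrite -[in LHS]eS -hs hg.
Qed.

Lemma frame_hom_mono (h : L -> M) a b : frame_hom h -> a ⊑ b -> h a ⊑ h b.
Proof. by move=> [_ hm _] ab; rewrite -(le_meet_eq ab) hm; apply: meet_r. Qed.

Lemma frame_hom_bot (h : L -> M) : frame_hom h -> h (fbot L) = fbot M.
Proof. by move=> [_ _ hs]; rewrite /fbot hs image_set0. Qed.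
End FrameHom.

Section SetFrame.
Variables (X : Type) (P : set (set X)).
Hypothesis PI : forall U V, P U -> P V -> P (U `&` V).
Definition sfcar := {U : set X | P U}.
Variable sup : set sfcar -> sfcar.
Hypothesis sup_ub : forall (S : set sfcar) (U : sfcar), S U -> proj1_sig U `<=` proj1_sig (sup S).
Hypothesis sup_least : forall (S : set sfcar) (V : sfcar), (forall U : sfcar, S U -> proj1_sig U `<=` proj1_sig V) ->
  proj1_sig (sup S) `<=` proj1_sig V.
Definition sf_meet (U V : sfcar) : sfcar := exist _ _ (PI (proj2_sig U) (proj2_sig V)).
Hypothesis sup_distr : forall (U : sfcar) (S : set sfcar),
  proj1_sig U `&` proj1_sig (sup S) = proj1_sig (sup [set sf_meet U V | V in S]).

Definition sf_le (U V : sfcar) := proj1_sig U `<=` proj1_sig V.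

Lemma sf_po : partial_order sf_le.
Proof.
split.
- by move=> x.
- by move=> x y h1 h2; apply: sig_eq; apply/seteqP; split.
- by move=> x y z h1 h2; apply: subset_trans h2.
Qed.

Lemma sf_glb a b c : sf_le c (sf_meet a b) <-> sf_le c a /\ sf_le c b.
Proof.
split; first by move=> h; split => x /h [].
by move=> [h1 h2] x cx; split; [apply: h1|apply: h2].
Qed.

Lemma sf_distr a S : sf_meet a (sup S) = sup [set sf_meet a s | s in S].
Proof. by apply: sig_eq; rewrite /= sup_distr. Qed.

Definition set_frame : frame :=
  @Frame sfcar sf_le sup sf_meet sf_po sup_ub sup_least sf_glb sf_distr.
End SetFrame.
Section OpenFrame.
Variable X : topologicalType.

Definition osup (S : set (sfcar (@open X))) : sfcar (@open X) :=
  exist _ (\bigcup_(U in S) proj1_sig U) (bigcup_open (fun U _ => proj2_sig U)).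

Lemma osup_ub (S : set (sfcar (@open X))) (U : sfcar (@open X)) :
  S U -> proj1_sig U `<=` proj1_sig (osup S).
Proof. by move=> SU x Ux; exists U. Qed.

Lemma osup_least (S : set (sfcar (@open X))) (V : sfcar (@open X)) :
  (forall U, S U -> proj1_sig U `<=` proj1_sig V) -> proj1_sig (osup S) `<=` proj1_sig V.
Proof. by move=> h x [U SU Ux]; apply: h SU _ Ux. Qed.

Lemma osup_distr (U : sfcar (@open X)) (S : set (sfcar (@open X))) :
  proj1_sig U `&` proj1_sig (osup S) =
  proj1_sig (osup [set sf_meet (@openI X) U V | V in S]).
Proof.
apply/seteqP; split => [x [Ux [V SV Vx]]|x [_ [V SV <-] [Ux Vx]]].
  by exists (sf_meet (@openI X) U V) => //; exists V.
by split => //; exists V.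
Qed.

Definition Ofr : frame := set_frame osup_ub osup_least osup_distr.

Lemma Ofr_le (U V : Ofr) : U ⊑ V = (proj1_sig U `<=` proj1_sig V). Proof. by []. Qed.
Lemma Ofr_sup (S : set Ofr) : proj1_sig (fsup S) = \bigcup_(U in S) proj1_sig U. Proof. by []. Qed.
Lemma Ofr_meet (U V : Ofr) : proj1_sig (U ⊓ V) = proj1_sig U `&` proj1_sig V. Proof. by []. Qed.
Lemma Ofr_top : proj1_sig (ftop Ofr) = setT.
Proof.
apply/seteqP; split => // x _.
by exists (exist _ setT (@openT X) : Ofr).
Qed.
Lemma Ofr_bot : proj1_sig (fbot Ofr) = set0.
Proof. by apply/seteqP; split => // x [].  Qed.

Definition Oel (U : set X) (oU : open U) : Ofr := exist _ U oU.

Lemma Ofr_stone : stone_space X -> stone_frame Ofr.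
Proof.
move=> sX; have [cX _ _] := sX; split.
- move=> S; rewrite Ofr_le Ofr_top Ofr_sup => cov.
  have := @compact_dir X setT [set V | exists T : set Ofr,
     [/\ finite_set T, T `<=` S & V = \bigcup_(U in T) proj1_sig U]].
  case.
  + exact: cX.
  + by move=> _ [T [_ _ ->]]; apply: bigcup_open => U _; exact: proj2_sig.
  + exists set0, set0; split; [exact: finite_set0|by []|by rewrite bigcup_set0].
  + move=> _ _ [T1 [f1 s1 ->]] [T2 [f2 s2 ->]].
    exists (\bigcup_(U in T1 `|` T2) proj1_sig U); split.
      exists (T1 `|` T2); split => //; first by rewrite finite_setU.
      by move=> U [/s1|/s2].
    by move=> x [[U T1U Ux]|[U T2U Ux]]; exists U => //; [left|right].
  + move=> x _; have [U SU Ux] := cov x I.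
    exists (proj1_sig U) => //.
    exists [set U]; split; [exact: finite_set1|by move=> V ->|].
    by apply/seteqP; split => [y Uy|y [V -> //]]; exists U.
  + move=> _ [[T [fT sT ->]] cT]; exists T; split => //.
    by move=> y _; apply: cT.
- move=> a; apply: le_anti; last by apply: fsup_least => c [].
  move=> x ax.
  have [C [[oC cC] Cx sC]] := stone_clopen_base sX (proj2_sig a) ax.
  exists (Oel oC) => //; split => //.
  apply: le_anti; first exact: top_ub.
  move=> y _.
  have [Cy|nCy] := pselect (C y); first by exists (Oel oC) => //; left.
  have oNC : open (~` C) by apply: closed_openC.
  exists (pseudocompl (Oel oC)); first by right.
  exists (Oel oNC) => //.
  apply: sig_eq => /=.
  by apply/seteqP; split => // z [].
Qed.
End OpenFrame.
Section OmegaFunctor.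

Definition Opre (X Y : topologicalType) (f : X -> Y) (cf : continuous f) (U : Ofr Y) : Ofr X :=
  Oel (proj1 (continuousP f) cf _ (proj2_sig U)).

Lemma Opre_hom (X Y : topologicalType) (f : X -> Y) (cf : continuous f) :
  frame_hom (Opre cf).
Proof.
split.
- apply: sig_eq; change (f @^-1` proj1_sig (ftop (Ofr Y)) = proj1_sig (ftop (Ofr X))).
  by rewrite !Ofr_top.
- by move=> a b; apply: sig_eq.
- move=> S; apply: sig_eq => /=; apply/seteqP; split.
    by move=> x [U SU Ux]; exists (Opre cf U) => //; exists U.
  by move=> x [_ [U SU <-] Ux]; exists U.
Qed.

Definition OmegaOb (X : ob Stone) : ob (op_category StoneFrm) :=
  exist _ (Ofr (proj1_sig X)) (Ofr_stone (proj2_sig X)).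

Definition OmegaHom (X Y : ob Stone) (f : hom Stone X Y) :
  hom (op_category StoneFrm) (OmegaOb X) (OmegaOb Y) :=
  exist _ (Opre (proj2_sig f)) (Opre_hom (proj2_sig f)).

Lemma OmegaHom_id (X : ob Stone) : OmegaHom (idm X) = idm (OmegaOb X).
Proof. by apply: sig_eq; apply: funext => U; apply: sig_eq. Qed.

Lemma OmegaHom_comp (X Y Z : ob Stone) (g : hom Stone Y Z) (f : hom Stone X Y) :
  OmegaHom (g \oc f) = OmegaHom g \oc OmegaHom f.
Proof. by apply: sig_eq; apply: funext => U; apply: sig_eq. Qed.

Definition OmegaF : functor Stone (op_category StoneFrm) :=
  @Functor Stone (op_category StoneFrm) OmegaOb OmegaHom OmegaHom_id OmegaHom_comp.

End OmegaFunctor.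
Lemma OmegaF_faithful (X Y : ob Stone) (f f' : hom Stone X Y) :
  Fmap OmegaF f = Fmap OmegaF f' -> f = f'.
Proof.
move=> /(congr1 (@proj1_sig _ _)) /= e.
apply: sig_eq; apply: funext => x; apply: contrapT => /eqP ne.
have [_ _ zY] := proj2_sig Y.
have [U [[oU cU] U1 U2]] := zY _ _ ne.
have := congr1 (fun k => proj1_sig (k (Oel oU)) x) e => /=.
by move=> h; apply: U2; rewrite -h.
Qed.

Lemma OmegaF_full (X Y : ob Stone) (h : hom (op_category StoneFrm) (OmegaF X) (OmegaF Y)) :
  exists f, Fmap OmegaF f = h.
Proof.
case: h => h hh /=.
have [h1 hm hs] := hh.
have ex : forall x : proj1_sig X, exists y : proj1_sig Y,
    forall U : Ofr (proj1_sig Y), proj1_sig U y <-> proj1_sig (h U) x.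
  move=> x.
  have [y hy] : exists y : proj1_sig Y, forall U : Ofr (proj1_sig Y), proj1_sig U y -> proj1_sig (h U) x.
    apply: contrapT => /forallNP hn.
    pose S := [set U : Ofr (proj1_sig Y) | ~ proj1_sig (h U) x].
    have eS : fsup S = ftop (Ofr (proj1_sig Y)).
      apply: sig_eq; rewrite Ofr_top; apply/seteqP; split => // y _.
      have /existsNP [U /not_implyP [Uy nhU]] := hn y.
      by exists U.
    have : proj1_sig (h (fsup S)) x by rewrite eS h1 Ofr_top.
    by rewrite hs => -[_ [U SU <-]].
  exists y => U; split; first exact: hy.
  move=> hUx.
  have sY := Ofr_stone (proj2_sig Y).
  move: hUx; rewrite {1}(sY.2 U) hs => -[_ [C [cC CU] <-] hCx].
  apply: CU; apply: contrapT => nCy.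
  have yC' : proj1_sig (pseudocompl C) y.
    have : proj1_sig (fjoin C (pseudocompl C)) y by rewrite cC Ofr_top.
    by case=> D [->|->].
  have hC'x := hy _ yC'.
  have : proj1_sig (h (C ⊓ pseudocompl C)) x by rewrite hm; split.
  rewrite (meet_pc (L:=Ofr (proj1_sig Y)) C).
  rewrite (frame_hom_bot hh).
  by rewrite Ofr_bot.
pose f x := proj1_sig (cid (ex x)).
have fP : forall x U, proj1_sig U (f x) <-> proj1_sig (h U) x.
  by move=> x0; exact: (proj2_sig (cid (ex x0))).
have cf : continuous f.
  apply/continuousP => A oA.
  have -> : f @^-1` A = proj1_sig (h (Oel oA)).
    by apply/seteqP; split => x /(fP x (Oel oA)).
  exact: proj2_sig.
exists (exist _ f cf : hom Stone X Y).
apply: sig_eq; apply: funext => U; apply: sig_eq => /=.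
by apply/seteqP; split => x /(fP x U).
Qed.
Lemma ultra_bigcup (T : Type) (F : set_system T) (I : Type) (g : I -> set T) :
  UltraFilter F -> forall A : set I, finite_set A ->
  F (\bigcup_(i in A) g i) -> exists2 i, A i & F (g i).
Proof.
move=> UF; have PF : ProperFilter F := ultra_proper.
apply: finite_ind.
  by rewrite bigcup_set0 => /filter_not_empty.
move=> A x _ IH hF.
have [Fx|Fnx] := in_ultra_setVsetC (g x) UF; first by exists x => //; left.
have : F (\bigcup_(i in A) g i).
  apply: filterS (filterI hF Fnx) => y [[i [->|Ai] gi] ngx] //.
  by exists i.
by move=> /IH [i Ai Fi]; exists i => //; right.
Qed.

Definition ptT (L : frame) := {p : set L | cpfilt p}.
HB.instance Definition _ (L : frame) := gen_eqMixin (ptT L).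
HB.instance Definition _ (L : frame) := gen_choiceMixin (ptT L).

Section PtTop.
Variable L : frame.
Definition ptop (U : set (ptT L)) :=
  forall p, U p -> exists a, proj1_sig p a /\ forall q : ptT L, proj1_sig q a -> U q.
Lemma ptopT : ptop setT.
Proof. by move=> p _; exists (ftop L); split => //; apply: filt_top; case: (proj2_sig p). Qed.
Lemma ptopI : setI_closed ptop.
Proof.
move=> U V oU oV p [Up Vp].
have [a [pa ha]] := oU p Up; have [b [pb hb]] := oV p Vp.
have fp := cpfilt_filt (proj2_sig p).
exists (a ⊓ b); split; first exact: filt_meet.
move=> q qab; have fq := cpfilt_filt (proj2_sig q).
by split; [apply: ha; apply: filt_le qab (meet_l _ _)|apply: hb; apply: filt_le qab (meet_r _ _)].
Qed.
Lemma ptop_bigU (I : Type) (f : I -> set (ptT L)) : (forall i, ptop (f i)) -> ptop (\bigcup_i f i).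
Proof.
move=> h p [i _ fip]; have [a [pa ha]] := h i p fip.
by exists a; split => // q qa; exists i => //; apply: ha.
Qed.
End PtTop.

HB.instance Definition _ (L : frame) := isOpenTopological.Build (ptT L) (@ptopT L) (@ptopI L) (@ptop_bigU L).
Section PtStone.
Variable L : frame.
Hypothesis sL : stone_frame L.
Implicit Types (a b c : L) (p q : ptT L).

Definition Opt a : set (ptT L) := [set p | proj1_sig p a].

Lemma Opt_open a : open (Opt a).
Proof. by move=> p pa; exists a. Qed.

Lemma open_Opt (U : set (ptT L)) p : open U -> U p -> exists a, proj1_sig p a /\ Opt a `<=` U.
Proof. by move=> oU Up; have [a [pa h]] := oU p Up; exists a. Qed.

Lemma Opt_mono a b : a ⊑ b -> Opt a `<=` Opt b.
Proof. by move=> ab p pa; apply: filt_le ab => //; apply: cpfilt_filt (proj2_sig p). Qed.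

Lemma Opt_top : Opt (ftop L) = setT.
Proof. by apply/seteqP; split => // p _; apply: filt_top; apply: cpfilt_filt (proj2_sig p). Qed.

Lemma Opt_meet a b : Opt (a ⊓ b) = Opt a `&` Opt b.
Proof.
apply/seteqP; split => p; have fp := cpfilt_filt (proj2_sig p).
  by move=> pab; split; [apply: (filt_le fp pab); apply: meet_l|apply: (filt_le fp pab); apply: meet_r].
by move=> [pa pb]; apply: (filt_meet fp).
Qed.

Lemma Opt_sup (S : set L) : Opt (fsup S) = \bigcup_(s in S) Opt s.
Proof.
apply/seteqP; split => p.
  by move=> /(cpfilt_sup (proj2_sig p)) [s Ss ps]; exists s.
by move=> [s Ss ps]; apply: Opt_mono ps; apply: fsup_ub.
Qed.

Lemma Opt_bot : Opt (fbot L) = set0.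
Proof. by rewrite /fbot Opt_sup bigcup_set0. Qed.

Lemma Opt_compl c : complemented c -> ~` Opt c = Opt (pseudocompl c).
Proof.
move=> hc; apply/seteqP; split => p.
  have : Opt (fjoin c (pseudocompl c)) p by rewrite hc Opt_top.
  by rewrite Opt_sup => -[s [->|->] ps].
move=> pc' pc; have : Opt (c ⊓ pseudocompl c) p by rewrite Opt_meet.
by rewrite meet_pc Opt_bot.
Qed.

Lemma Opt_clopen c : complemented c -> clopen (Opt c).
Proof.
move=> hc; split; first exact: Opt_open.
by rewrite -[Opt c]setCK; apply: open_closedC; rewrite Opt_compl //; apply: Opt_open.
Qed.

Lemma pt_sep p q a : proj1_sig p a -> ~ proj1_sig q a ->
  exists c, [/\ complemented c, Opt c p & Opt (pseudocompl c) q].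
Proof.
move=> pa nqa; move: pa; rewrite (sL.2 a) => /(cpfilt_sup (proj2_sig p)) [c [hc ca] pc].
exists c; split => //; rewrite -Opt_compl // => qc; apply: nqa.
by apply: Opt_mono qc.
Qed.

Lemma pt_neq p q : p != q -> exists a, (proj1_sig p a /\ ~ proj1_sig q a) \/ (proj1_sig q a /\ ~ proj1_sig p a).
Proof.
move=> /eqP npq; apply: contrapT => h; apply: npq; apply: sig_eq.
apply/funext => a; apply/propext; split => ha; apply: contrapT => hb; apply: h; exists a; by [left|right].
Qed.

Lemma pt_stone : stone_space (ptT L).
Proof.
split.
- rewrite compact_ultra => F UF _.
  have PF : ProperFilter F := ultra_proper.
  pose q := [set x | exists2 c, complemented c /\ F (Opt c) & c ⊑ x].
  have cq : cpfilt q.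
    split; first split.
    + by exists (ftop L); [split; [exact: compl_top|rewrite Opt_top; exact: filterT]|exact: le_refl].
    + by move=> a b [c hc ca] ab; exists c => //; apply: le_trans ab.
    + move=> a b [c [cc Fc] ca] [d [cd Fd] db]; exists (c ⊓ d); last exact: meet_mono.
      by split; [exact: compl_meet|rewrite Opt_meet; exact: filterI].
    + move=> S [c [cc Fc] cS].
      have [T [fT sT cT]] := compl_compact sL.1 cc (le_trans cS (sup_compl_below sL S)).
      have : F (\bigcup_(t in T) Opt t) by rewrite -Opt_sup; apply: filterS Fc; apply: Opt_mono.
      move=> /(ultra_bigcup UF fT) [t Tt Ft].
      have [ct [s Ss ts]] := sT t Tt.
      by exists s => //; exists t.
  exists (exist _ q cq); split => // A /=.
  rewrite nbhsE => -[B [oB Bq] BA].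
  have [a [[c [cc Fc] ca] sa]] := open_Opt oB Bq.
  by apply: filterS BA (filterS sa (filterS (Opt_mono ca) Fc)).
- rewrite open_hausdorff => p q /pt_neq [a [[pa nqa]|[qa npa]]].
    have [c [hc pc qc]] := pt_sep pa nqa.
    exists (Opt c, Opt (pseudocompl c)); first by rewrite !inE.
    split; [exact: Opt_open|exact: Opt_open|].
    by apply/eqP; rewrite -Opt_meet meet_pc Opt_bot.
  have [c [hc qc pc]] := pt_sep qa npa.
  exists (Opt (pseudocompl c), Opt c); first by rewrite !inE.
  split; [exact: Opt_open|exact: Opt_open|].
  by apply/eqP; rewrite -Opt_meet meetC meet_pc Opt_bot.
- move=> p q /pt_neq [a [[pa nqa]|[qa npa]]].
    have [c [hc pc qc]] := pt_sep pa nqa.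
    exists (Opt c); split => //; first exact: Opt_clopen.
    by move=> qc'; have : (~` Opt c) q by rewrite Opt_compl.
  have [c [hc qc pc]] := pt_sep qa npa.
  exists (~` Opt c); split; [by apply: clopenC; apply: Opt_clopen|by rewrite Opt_compl|by move=> /(_ qc)].
Qed.
End PtStone.
Section PtIso.
Variable L : frame.
Hypothesis sL : stone_frame L.

Definition phiO (a : L) : Ofr (ptT L) := Oel (@Opt_open L a).

Lemma phiO_hom : frame_hom phiO.
Proof.
split.
- apply: sig_eq; change (Opt (ftop L) = proj1_sig (ftop (Ofr (ptT L)))).
  by rewrite Opt_top Ofr_top.
- by move=> a b; apply: sig_eq; rewrite /= Opt_meet.
- move=> S; apply: sig_eq; rewrite /= Opt_sup; apply/seteqP; split.
    by move=> p [s Ss ps]; exists (phiO s) => //; exists s.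
  by move=> p [_ [s Ss <-] ps]; exists s.
Qed.
Definition psiO (U : Ofr (ptT L)) : L := fsup [set a | Opt a `<=` proj1_sig U].
Lemma phiO_psiO U : phiO (psiO U) = U.
Proof.
apply: sig_eq; rewrite /= Opt_sup; apply/seteqP; split.
  by move=> p [s sU ps]; apply: sU.
move=> p Up; have [a [pa sa]] := open_Opt (proj2_sig U) Up.
by exists a.
Qed.
Lemma psiO_phiO a : psiO (phiO a) = a.
Proof.
apply: le_anti; last by apply: fsup_ub.
apply: fsup_least => b /= sba; apply: contrapT => nba.
have [p [cp pb npa]] := spatial sL nba.
by apply: npa; apply: (sba (exist _ p cp)).
Qed.
Lemma psiO_hom : frame_hom psiO.
Proof. exact: frame_hom_inv phiO_hom psiO_phiO phiO_psiO. Qed.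
End PtIso.
Lemma OmegaF_es (d : ob (op_category StoneFrm)) :
  exists c (u : hom (op_category StoneFrm) (OmegaF c) d) (v : hom (op_category StoneFrm) d (OmegaF c)),
  v \oc u = idm (OmegaF c) /\ u \oc v = idm d.
Proof.
case: d => L sL.
exists (exist stone_space (ptT L : topologicalType) (pt_stone sL) : ob Stone).
exists (exist _ (@phiO L) (@phiO_hom L)).
exists (exist _ (@psiO L) (psiO_hom sL)).
split; apply: sig_eq; apply: funext => x /=.
  exact: phiO_psiO.
exact: psiO_phiO.
Qed.
Lemma Stone_dual : equivalent Stone (op_category StoneFrm).
Proof. exact: ff_es_equiv OmegaF_faithful OmegaF_full OmegaF_es. Qed.
Section LSpaceLemmas.
Variable X : ordtop.
Hypothesis hX : L_space X.

Lemma LX_stone : stone_space X. Proof. by case: hX => -[]. Qed.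
Lemma LX_po : partial_order (@ole X). Proof. by case: hX => -[]. Qed.
Lemma LX_sep (x y : X) : ~ ole x y -> exists U : set X, [/\ clopup U, U x & ~ U y].
Proof. by case: hX => -[_ _ h] _ _; apply: h. Qed.
Lemma LX_down (A : set X) : clopen A -> clopen (Defs.down A). Proof. by case: hX => _ h _; apply: h. Qed.
Lemma LX_clo (U : set X) : open U -> upset U -> open (closure U). Proof. by case: hX => _ _ h; apply: h. Qed.
Lemma LX_cpt : compact [set: X]. Proof. by case: LX_stone. Qed.
Lemma upset_closure (W : set X) : upset W -> upset (closure W).
Proof.
move=> uW x y clx xy B; rewrite nbhsE => -[N [oN Ny] NB].
have [C [cC Cy CN]] := stone_clopen_base LX_stone oN Ny.
have [oD _] := LX_down cC.
have := clx (Defs.down C) (open_nbhs_nbhs (conj oD (ex_intro2 _ _ y Cy xy))).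
move=> [z [Wz [c Cc zc]]].
by exists c; split; [apply: uW Wz zc|apply: NB; apply: CN].
Qed.
Lemma open_upset_clopup (U : set X) x : open U -> upset U -> U x ->
  exists V, [/\ clopup V, V x & V `<=` U].
Proof.
move=> oU uU Ux.
have := @compact_dir X (~` U) [set W | exists V, [/\ clopup V, V x & W = ~` V]].
case.
- exact: compact_closed_sub LX_cpt (open_closedC oU).
- by move=> _ [V [[[_ cV] _] _ ->]]; apply: closed_openC.
- exists (~` setT), setT; split => //; split; first exact: clopenT.
  by move=> ? ?.
- move=> _ _ [V1 [[c1 u1] x1 ->]] [V2 [[c2 u2] x2 ->]]; exists (~` (V1 `&` V2)); split.
    exists (V1 `&` V2); split => //; split; first exact: clopenI.
    by move=> a b [h1 h2] ab; split; [apply: u1 h1 ab|apply: u2 h2 ab].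
  by move=> z [nz|nz] [].
- move=> z nUz; have nxz : ~ ole x z by move=> xz; apply: nUz; apply: uU Ux xz.
  have [V [cV Vx nVz]] := LX_sep nxz.
  by exists (~` V) => //; exists V.
- move=> _ [[V [cV Vx ->]] sV]; exists V; split => // c Vc.
  by apply: contrapT => nUc; have := sV c nUc.
Qed.
Lemma open_clopup_diff (N : set X) y : open N -> N y ->
  exists V W, [/\ clopup V, clopup W, V y, ~ W y & V `\` W `<=` N].
Proof.
move=> oN Ny.
have := @compact_dir X (~` N) [set A | exists V W, [/\ clopup V, clopup W, V y, ~ W y & A = ~` V `|` W]].
case.
- exact: compact_closed_sub LX_cpt (open_closedC oN).
- move=> _ [V [W [[[_ cV] _] [[oW _] _] _ _ ->]]].
  by apply: openU => //; apply: closed_openC.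
- exists (~` setT `|` set0), setT, set0; split => //.
  + by split; [exact: clopenT|by move=> ? ?].
  + by split; [exact: clopen0|by move=> ? ?].
- move=> _ _ [V1 [W1 [[c1 u1] [d1 w1] y1 n1 ->]]] [V2 [W2 [[c2 u2] [d2 w2] y2 n2 ->]]].
  exists (~` (V1 `&` V2) `|` (W1 `|` W2)); split.
    exists (V1 `&` V2), (W1 `|` W2); split => //.
    + split; first exact: clopenI.
      by move=> a b [h1 h2] ab; split; [apply: u1 h1 ab|apply: u2 h2 ab].
    + split; first exact: clopenU.
      by move=> a b [h|h] ab; [left; apply: w1 h ab|right; apply: w2 h ab].
    + by case.
  move=> z hz; case: hz => [[h|h]|[h|h]].
  - by left => -[a _]; apply: h.
  - by right; left.
  - by left => -[_ a]; apply: h.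
  - by right; right.
- move=> z nNz.
  have nzy : z != y by apply/eqP => e; apply: nNz; rewrite e.
  have [ao|an] := pselect (ole y z).
    have nzy' : ~ ole z y.
      move=> zy; apply: (negP nzy); apply/eqP.
      by have [_ anti _] := LX_po; apply: anti.
    have [W [cW Wz nWy]] := LX_sep nzy'.
    exists (~` setT `|` W); last by right.
    exists setT, W; split => //; split; [exact: clopenT|by move=> ? ?].
  have [V [cV Vy nVz]] := LX_sep an.
  exists (~` V `|` set0); last by left.
  exists V, set0; split => //; split; [exact: clopen0|by move=> ? ?].
- move=> _ [[V [W [cV cW Vy nWy ->]]] sA].
  exists V, W; split => // z [Vz nWz]; apply: contrapT => nNz.
  by case: (sA z nNz).
Qed.
End LSpaceLemmas.
Section CUFrame.
Variable X : ordtop.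
Hypothesis hX : L_space X.

Lemma clopupI (U V : set X) : clopup U -> clopup V -> clopup (U `&` V).
Proof.
move=> [cU uU] [cV uV]; split; first exact: clopenI.
by move=> a b [h1 h2] ab; split; [apply: uU h1 ab|apply: uV h2 ab].
Qed.
Lemma clopup_bigcup_open (S : set (sfcar (@clopup X))) :
  open (\bigcup_(U in S) proj1_sig U).
Proof. by apply: bigcup_open => U _; case: (proj2_sig U) => -[]. Qed.
Lemma clopup_bigcup_up (S : set (sfcar (@clopup X))) :
  upset (\bigcup_(U in S) proj1_sig U).
Proof. by move=> x y [U SU Ux] xy; exists U => //; case: (proj2_sig U) => _ h; apply: h Ux xy. Qed.
Lemma cusup_P (S : set (sfcar (@clopup X))) : clopup (closure (\bigcup_(U in S) proj1_sig U)).
Proof.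
split; last exact (upset_closure hX (@clopup_bigcup_up S)).
split; last exact: closed_closure.
exact (LX_clo hX (@clopup_bigcup_open S) (@clopup_bigcup_up S)).
Qed.
Definition cusup (S : set (sfcar (@clopup X))) : sfcar (@clopup X) := exist _ _ (cusup_P S).
Lemma cusup_ub (S : set (sfcar (@clopup X))) (U : sfcar (@clopup X)) :
  S U -> proj1_sig U `<=` proj1_sig (cusup S).
Proof. by move=> SU x Ux; apply: subset_closure; exists U. Qed.
Lemma cusup_least (S : set (sfcar (@clopup X))) (V : sfcar (@clopup X)) :
  (forall U, S U -> proj1_sig U `<=` proj1_sig V) -> proj1_sig (cusup S) `<=` proj1_sig V.
Proof.
move=> h; have [[_ cV] _] := proj2_sig V.
rewrite [X in _ `<=` X](closure_id _).1 //; apply: closureS.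
by move=> x [U SU Ux]; apply: h SU _ Ux.
Qed.
Lemma cusup_distr (U : sfcar (@clopup X)) (S : set (sfcar (@clopup X))) :
  proj1_sig U `&` proj1_sig (cusup S) =
  proj1_sig (cusup [set sf_meet clopupI U V | V in S]).
Proof.
have [[oU cU] _] := proj2_sig U.
apply/seteqP; split => /=.
  move=> x [Ux clx] B nB.
  have nUB : nbhs x (proj1_sig U `&` B) by apply: filterI => //; apply: open_nbhs_nbhs.
  have [z [[V SV Vz] [Uz Bz]]] := clx _ nUB.
  by exists z; split => //; exists (sf_meet clopupI U V) => //; exists V.
move=> x clx; split.
  have e := (closure_id (proj1_sig U)).1 cU.
  rewrite e; apply: (@closureS _ _ _ _ x clx).
  by move=> z [_ [V SV <-] [Uz _]].
apply: (@closureS _ _ _ _ x clx) => z [_ [V SV <-] [_ Vz]].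
by exists V.
Qed.
Definition CUfr : frame := set_frame cusup_ub cusup_least cusup_distr.
Lemma CU_sup (S : set CUfr) : proj1_sig (fsup S) = closure (\bigcup_(U in S) proj1_sig U).
Proof. by []. Qed.
Lemma CU_top : proj1_sig (ftop CUfr) = setT.
Proof.
apply/seteqP; split => // x _; rewrite CU_sup; apply: subset_closure.
have cT : clopup (@setT X) by split; [exact: clopenT|by move=> ? ?].
by exists (exist _ setT cT : CUfr).
Qed.
Lemma CU_bot : proj1_sig (fbot CUfr) = set0.
Proof. by rewrite CU_sup bigcup_set0 closure0. Qed.
Lemma CU_join (U V : CUfr) : proj1_sig (fjoin U V) = proj1_sig U `|` proj1_sig V.
Proof.
rewrite CU_sup.
have -> : \bigcup_(W in [set U; V]) proj1_sig W = proj1_sig U `|` proj1_sig V.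
  apply/seteqP; split => [x [W [->|->] Wx]|x [Ux|Vx]]; [by left|by right|by exists U => //; left|by exists V => //; right].
have [[_ cU] _] := proj2_sig U; have [[_ cV] _] := proj2_sig V.
by rewrite -(closure_id _).1 //; apply: closedU.
Qed.
Lemma CU_le (U V : CUfr) : U ⊑ V = (proj1_sig U `<=` proj1_sig V). Proof. by []. Qed.
Lemma CU_meet (U V : CUfr) : proj1_sig (U ⊓ V) = proj1_sig U `&` proj1_sig V. Proof. by []. Qed.

End CUFrame.
Section CUStone.
Variable X : ordtop.
Hypothesis hX : stone_L_space X.
Let hL : L_space X. Proof. by case: hX. Qed.

Lemma CU_stone : stone_frame (CUfr hL).
Proof.
split.
- move=> S; rewrite CU_le CU_top CU_sup => cov.
  have covS : [set: X] `<=` \bigcup_(U in S) proj1_sig U.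
    move=> x _; have [_ cX _] := hX.
    have : Lker [set: X] x by rewrite -cX.
    move=> [V [cV wV Vx]].
    apply: (wV _ (@clopup_bigcup_open _ S) (@clopup_bigcup_up _ S) cov _ Vx).
  have := @compact_dir X setT [set V | exists T : set (CUfr hL),
     [/\ finite_set T, T `<=` S & V = \bigcup_(U in T) proj1_sig U]].
  case.
  + exact: LX_cpt hL.
  + by move=> _ [T [_ _ ->]]; apply: (@clopup_bigcup_open _ T).
  + exists set0, set0; split; [exact: finite_set0|by []|by rewrite bigcup_set0].
  + move=> _ _ [T1 [f1 s1 ->]] [T2 [f2 s2 ->]].
    exists (\bigcup_(U in T1 `|` T2) proj1_sig U); split.
      exists (T1 `|` T2); split => //; first by rewrite finite_setU.
      by move=> U [/s1|/s2].
    by move=> x [[U T1U Ux]|[U T2U Ux]]; exists U => //; [left|right].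
  + move=> x _; have [U SU Ux] := covS x I.
    exists (proj1_sig U) => //.
    exists [set U]; split; [exact: finite_set1|by move=> V ->|].
    by apply/seteqP; split => [y Uy|y [V -> //]]; exists U.
  + move=> _ [[T [fT sT ->]] cT]; exists T; split => //.
    by rewrite CU_le CU_top CU_sup => y _; apply: subset_closure; apply: cT.
- move=> a; apply: le_anti; last by apply: fsup_least => c [].
  rewrite CU_le CU_sup => x ax.
  have [_ _ dens] := hX.
  apply: (@closureS _ _ _ _ x (dens _ (proj2_sig a) x ax)).
  move=> y [V [cV [uV dV] Va Vy]].
  have cuV : clopup V by [].
  have cuNV : clopup (~` V).
    split; first exact: clopenC.
    by move=> p q nVp pq Vq; apply: nVp; apply: dV Vq pq.
  exists (exist _ V cuV : CUfr hL) => //; split => //.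
  apply: le_anti; first exact: top_ub.
  rewrite CU_le CU_top CU_join => z _.
  have [Vz|nVz] := pselect (V z); first by left.
  right; apply: subset_closure; exists (exist _ (~` V) cuNV : CUfr hL) => //.
  by apply: sig_eq; rewrite CU_meet CU_bot; apply/seteqP; split => // w [].
Qed.
End CUStone.
Definition LofSL (X : ordtop) (h : stone_L_space X) : L_space X :=
  match h with And3 a _ _ => a end.
Lemma CU_stone' (X : ordtop) (h : stone_L_space X) : stone_frame (CUfr (LofSL h)).
Proof. by rewrite (Prop_irrelevance (LofSL h) (hL_subproof h)); exact: CU_stone. Qed.
Section CUpre.
Variables (X Y : ordtop) (hX : L_space X) (hY : L_space Y) (f : X -> Y) (lf : L_morphism f).

Lemma CUpre_P (V : CUfr hY) : clopup (f @^-1` proj1_sig V).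
Proof.
have [cf mf clf] := lf.
have [[oV cV] uV] := proj2_sig V.
split; first split.
- exact: (proj1 (continuousP f) cf _ oV).
- have -> : f @^-1` proj1_sig V = ~` (f @^-1` (~` proj1_sig V)).
    by apply/seteqP; split => x /= h; [move=> nh; apply: nh|apply: contrapT].
  apply: open_closedC; apply: (proj1 (continuousP f) cf).
  exact: closed_openC.
- by move=> x y Vfx xy; apply: uV Vfx (mf _ _ xy).
Qed.
Definition CUpre (V : CUfr hY) : CUfr hX := exist _ _ (CUpre_P V).
Lemma CUpre_hom : frame_hom CUpre.
Proof.
have [cf mf clf] := lf.
split.
- apply: sig_eq; change (f @^-1` proj1_sig (ftop (CUfr hY)) = proj1_sig (ftop (CUfr hX))).
  by rewrite !CU_top.
- by move=> a b; apply: sig_eq.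
- move=> S; apply: sig_eq.
  change (f @^-1` closure (\bigcup_(U in S) proj1_sig U) =
          closure (\bigcup_(U in CUpre @` S) proj1_sig U)).
  rewrite clf; [|exact: (@clopup_bigcup_open _ S)|exact: (@clopup_bigcup_up _ S)].
  congr closure; apply/seteqP; split.
    by move=> x [U SU Ux]; exists (CUpre U) => //; exists U.
  by move=> x [_ [U SU <-] Ux]; exists U.
Qed.
End CUpre.
Definition KOb (X : ob StoneLPries) : ob (op_category StoneFrm) :=
  exist _ (CUfr (LofSL (proj2_sig X))) (CU_stone' (proj2_sig X)).
Definition KHom (X Y : ob StoneLPries) (f : hom StoneLPries X Y) :
  hom (op_category StoneFrm) (KOb X) (KOb Y) :=
  exist _ (@CUpre _ _ (LofSL (proj2_sig X)) (LofSL (proj2_sig Y)) _ (proj2_sig f))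
    (CUpre_hom (LofSL (proj2_sig X)) (LofSL (proj2_sig Y)) (proj2_sig f)).
Lemma KHom_id (X : ob StoneLPries) : KHom (idm X) = idm (KOb X).
Proof. by apply: sig_eq; apply: funext => U; apply: sig_eq. Qed.
Lemma KHom_comp (X Y Z : ob StoneLPries) (g : hom StoneLPries Y Z) (f : hom StoneLPries X Y) :
  KHom (g \oc f) = KHom g \oc KHom f.
Proof. by apply: sig_eq; apply: funext => U; apply: sig_eq. Qed.
Definition KF : functor StoneLPries (op_category StoneFrm) :=
  @Functor StoneLPries (op_category StoneFrm) KOb KHom KHom_id KHom_comp.
Lemma KF_faithful (X Y : ob StoneLPries) (f f' : hom StoneLPries X Y) :
  Fmap KF f = Fmap KF f' -> f = f'.
Proof.
move=> /(congr1 (@proj1_sig _ _)) /= e.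
apply: sig_eq; apply: funext => x; apply: contrapT => ne.
have hY := LofSL (proj2_sig Y).
have [_ anti _] := LX_po hY.
have [h|h] : ~ ole (proj1_sig f x) (proj1_sig f' x) \/ ~ ole (proj1_sig f' x) (proj1_sig f x).
  by apply: contrapT => /not_orP [/contrapT h1 /contrapT h2]; apply: ne; apply: anti.
  have [U [cU U1 U2]] := LX_sep hY h.
  pose V : CUfr (LofSL (proj2_sig Y)) := exist _ U cU.
  have := congr1 (fun k => proj1_sig (k V) x) e => /= h'.
  by apply: U2; rewrite -h'.
have [U [cU U1 U2]] := LX_sep hY h.
pose V : CUfr (LofSL (proj2_sig Y)) := exist _ U cU.
have := congr1 (fun k => proj1_sig (k V) x) e => /= h'.
by apply: U2; rewrite h'.
Qed.
Lemma frame_hom_join (L M : frame) (h : L -> M) a b : frame_hom h ->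
  h (fjoin a b) = fjoin (h a) (h b).
Proof.
move=> [_ _ hs]; rewrite /fjoin hs; congr fsup.
by apply/seteqP; split => [_ [x [->|->] <-]|_ [->|->]]; [left|right|exists a => //; left|exists b => //; right].
Qed.
Lemma open_upset_cup (Y : ordtop) (hY : L_space Y) (U : set Y) : open U -> upset U ->
  \bigcup_(V in [set V : CUfr hY | proj1_sig V `<=` U]) proj1_sig V = U.
Proof.
move=> oU uU; apply/seteqP; split => [y [V sV Vy]|y Uy]; first exact: sV.
have [V [cV Vy sV]] := open_upset_clopup hY oU uU Uy.
by exists (exist _ V cV : CUfr hY).
Qed.
Lemma KF_full (X Y : ob StoneLPries) (h : hom (op_category StoneFrm) (KF X) (KF Y)) :
  exists f, Fmap KF f = h.
Proof.
case: h => h hh /=.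
have [h1 hm hs] := hh.
set hX := LofSL (proj2_sig X) in h hh h1 hm hs *.
set hY := LofSL (proj2_sig Y) in h hh h1 hm hs *.
have ex : forall x : proj1_sig X, exists y : proj1_sig Y,
    forall V : CUfr hY, proj1_sig V y <-> proj1_sig (h V) x.
  move=> x; apply: contrapT => /forallNP hn.
  have := @compact_dir (proj1_sig Y) setT [set A | exists V W : CUfr hY,
     [/\ proj1_sig (h V) x, ~ proj1_sig (h W) x & A = ~` proj1_sig V `|` proj1_sig W]].
  case.
  - exact: LX_cpt hY.
  - move=> _ [V [W [_ _ ->]]]; apply: openU.
      by apply: closed_openC; case: (proj2_sig V) => -[].
    by case: (proj2_sig W) => -[].
  - exists (~` proj1_sig (ftop (CUfr hY)) `|` proj1_sig (fbot (CUfr hY))).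
    exists (ftop (CUfr hY)), (fbot (CUfr hY)); split => //.
      by rewrite h1 CU_top.
    by rewrite (frame_hom_bot hh) CU_bot.
  - move=> _ _ [V1 [W1 [x1 n1 ->]]] [V2 [W2 [x2 n2 ->]]].
    exists (~` proj1_sig (V1 ⊓ V2) `|` proj1_sig (fjoin W1 W2)); split.
      exists (V1 ⊓ V2), (fjoin W1 W2); split => //.
        by rewrite hm.
      by rewrite frame_hom_join // CU_join => -[].
    rewrite CU_join CU_meet => z hz; case: hz => [[hz|hz]|[hz|hz]].
    + by left => -[a _]; apply: hz.
    + by right; left.
    + by left => -[_ a]; apply: hz.
    + by right; right.
  - move=> y _; have /existsNP [V hV] := hn y.
    have [Vy|nVy] := pselect (proj1_sig V y).
      exists (~` proj1_sig (ftop (CUfr hY)) `|` proj1_sig V); last by right.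
      exists (ftop (CUfr hY)), V; split => //; first by rewrite h1 CU_top.
      by move=> hVx; apply: hV; split.
    exists (~` proj1_sig V `|` proj1_sig (fbot (CUfr hY))); last by left.
    exists V, (fbot (CUfr hY)); split => //; last by rewrite (frame_hom_bot hh) CU_bot.
    by apply: contrapT => nhV; apply: hV; split.
  - move=> _ [[V [W [xV nW ->]]] cov].
    have VW : V ⊑ W.
      by move=> z Vz; case: (cov z I).
    by apply: nW; apply: (frame_hom_mono hh VW).
pose f x := proj1_sig (cid (ex x)).
have fP : forall x V, proj1_sig V (f x) <-> proj1_sig (h V) x.
  by move=> x0; exact: (proj2_sig (cid (ex x0))).
have [_ antiY _] := LX_po hY.
have lf : L_morphism f.
  split.
  - apply/continuousP => A oA; apply: open_loc => x Afx.
    have [V [W [cV cW Vy nWy sA]]] := open_clopup_diff hY oA Afx.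
    pose V' : CUfr hY := exist _ V cV; pose W' : CUfr hY := exist _ W cW.
    exists (proj1_sig (h V') `&` ~` proj1_sig (h W')); split.
    + apply: openI; first by case: (proj2_sig (h V')) => -[].
      by apply: closed_openC; case: (proj2_sig (h W')) => -[].
    + by split; [apply/(fP x V')|move=> /(fP x W')].
    + move=> z [hVz nhWz]; apply: sA; split; first exact/(fP z V').
      by move=> /(fP z W').
  - move=> x x' xx'; apply: contrapT => nf.
    have [U [cU U1 U2]] := LX_sep hY nf.
    pose U' : CUfr hY := exist _ U cU.
    apply: U2; apply/(fP x' U').
    have [_ uh] := proj2_sig (h U').
    by apply: uh xx'; apply/(fP x U').
  - move=> U oU uU.
    pose S := [set V : CUfr hY | proj1_sig V `<=` U].
    have eU := open_upset_cup hY oU uU.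
    have -> : closure U = proj1_sig (fsup S) by rewrite CU_sup eU.
    have -> : f @^-1` proj1_sig (fsup S) = proj1_sig (h (fsup S)).
      by apply/seteqP; split => x /(fP x (fsup S)).
    rewrite hs CU_sup; congr closure.
    rewrite -[in RHS]eU preimage_bigcup; apply/seteqP; split.
      move=> x [_ [V SV <-] hVx]; exists V => //.
      by apply/(fP x V).
    move=> x [V SV hfx]; exists (h V); first by exists V.
    exact/(fP x V).
exists (exist _ f lf : hom StoneLPries X Y).
apply: sig_eq; apply: funext => V; apply: sig_eq => /=.
by apply/seteqP; split => x /(fP x V).
Qed.
Definition PF (L : frame) := {p : set L | pfilt p}.
HB.instance Definition _ (L : frame) := gen_eqMixin (PF L).
HB.instance Definition _ (L : frame) := gen_choiceMixin (PF L).
Section PFTop.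
Variable L : frame.
Definition pfop (U : set (PF L)) :=
  forall p, U p -> exists a b, [/\ proj1_sig p a, ~ proj1_sig p b &
    forall q : PF L, proj1_sig q a -> ~ proj1_sig q b -> U q].
Lemma pfopT : pfop setT.
Proof.
move=> p _; exists (ftop L), (fbot L); split => //.
  by apply: filt_top; apply: pfilt_filt (proj2_sig p).
exact: pfilt_bot (proj2_sig p).
Qed.
Lemma pfopI : setI_closed pfop.
Proof.
move=> U V oU oV p [Up Vp].
have [a [b [pa npb ha]]] := oU p Up; have [a' [b' [pa' npb' ha']]] := oV p Vp.
have pp := proj2_sig p.
exists (a ⊓ a'), (fjoin b b'); split.
- by apply: filt_meet => //; apply: pfilt_filt.
- by move=> /(pfilt_join pp) [].
- move=> q qa nqb; have pq := proj2_sig q.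
  move: qa; rewrite pfilt_meetE // => -[qa qa'].
  move: nqb; rewrite pfilt_joinE // => /not_orP [nb nb'].
  by split; [apply: ha|apply: ha'].
Qed.
Lemma pfop_bigU (I : Type) (f : I -> set (PF L)) : (forall i, pfop (f i)) -> pfop (\bigcup_i f i).
Proof.
move=> h p [i _ fip]; have [a [b [pa npb ha]]] := h i p fip.
by exists a, b; split => // q qa nqb; exists i => //; apply: ha.
Qed.
End PFTop.
HB.instance Definition _ (L : frame) := isOpenTopological.Build (PF L) (@pfopT L) (@pfopI L) (@pfop_bigU L).
Definition XL (L : frame) : ordtop :=
  @OrdTop (PF L : topologicalType) (fun p q => proj1_sig p `<=` proj1_sig q).
Section XLBasic.
Variable L : frame.
Implicit Types (a b c : L).

Definition phi a : set (XL L) := [set p | proj1_sig p a].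
Lemma phi_top : phi (ftop L) = setT.
Proof. by apply/seteqP; split => // p _; apply: filt_top; apply: pfilt_filt (proj2_sig p). Qed.
Lemma phi_bot : phi (fbot L) = set0.
Proof. by apply/seteqP; split => // p /(pfilt_bot (proj2_sig p)). Qed.
Lemma phi_meet a b : phi (a ⊓ b) = phi a `&` phi b.
Proof. by apply/seteqP; split => p; rewrite /phi /= pfilt_meetE //; apply: (proj2_sig p). Qed.
Lemma phi_join a b : phi (fjoin a b) = phi a `|` phi b.
Proof. by apply/seteqP; split => p; rewrite /phi /= pfilt_joinE //; apply: (proj2_sig p). Qed.
Lemma phi_mono a b : a ⊑ b -> phi a `<=` phi b.
Proof. by move=> ab p pa; apply: filt_le pa ab; apply: pfilt_filt (proj2_sig p). Qed.
Lemma phi_le a b : phi a `<=` phi b -> a ⊑ b.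
Proof.
move=> h; apply: contrapT => nab.
have [p [pp pa npb]] := prime_sep nab.
by apply: npb; apply: (h (exist _ p pp)).
Qed.
Lemma phi_open a : open (phi a).
Proof.
move=> p pa; exists a, (fbot L); split => //.
exact: pfilt_bot (proj2_sig p).
Qed.
Lemma phi_openC a : open (~` phi a).
Proof.
move=> p npa; exists (ftop L), a; split => //.
by apply: filt_top; apply: pfilt_filt (proj2_sig p).
Qed.
Lemma phi_closed a : closed (phi a).
Proof. by rewrite -[phi a]setCK; apply: open_closedC; exact: phi_openC. Qed.
Lemma phi_clopup a : clopup (phi a).
Proof.
split; first by split; [exact: phi_open|exact: phi_closed].
by move=> p q pa pq; apply: pq.
Qed.
Lemma open_basic (U : set (XL L)) p : open U -> U p ->
  exists a b, [/\ proj1_sig p a, ~ proj1_sig p b & phi a `&` ~` phi b `<=` U].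
Proof. by move=> oU Up; have [a [b [pa npb h]]] := oU p Up; exists a, b; split => // q [] /h. Qed.
Lemma XL_neq (p q : XL L) : p <> q -> exists a, (proj1_sig p a /\ ~ proj1_sig q a) \/ (proj1_sig q a /\ ~ proj1_sig p a).
Proof.
move=> npq; apply: contrapT => h; apply: npq; apply: sig_eq.
apply/funext => a; apply/propext; split => ha; apply: contrapT => hb; apply: h; exists a; by [left|right].
Qed.
Lemma XL_po : partial_order (@ole (XL L)).
Proof.
split.
- by move=> x.
- move=> x y h1 h2; apply: sig_eq; apply/seteqP; split; [exact: h1|exact: h2].
- by move=> x y z h1 h2 a /h1 /h2.
Qed.
Lemma XL_stone : stone_space (XL L).
Proof.
split.
- rewrite compact_ultra => F UF _.
  have PF0 : ProperFilter F := ultra_proper.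
  pose q := [set a | F (phi a)].
  have pq : pfilt q.
    split; first split.
    + by rewrite /q /= phi_top; apply: filterT.
    + by move=> a b Fa ab; apply: filterS Fa; apply: phi_mono.
    + by move=> a b Fa Fb; rewrite /q /= phi_meet; apply: filterI.
    + by rewrite /q /= phi_bot => /filter_not_empty.
    + move=> a b; rewrite /q /= phi_join => Fab.
      have [Fa|Fna] := in_ultra_setVsetC (phi a) UF; first by left.
      by right; apply: filterS (filterI Fab Fna) => p [[|]].
  exists (exist _ q pq); split => // A /=.
  rewrite nbhsE => -[B [oB Bq] BA].
  have [a [b [qa nqb sab]]] := open_basic oB Bq.
  have Fnb : F (~` phi b).
    by have [//|] := in_ultra_setVsetC (phi b) UF.
  exact: filterS BA (filterS sab (filterI qa Fnb)).
- rewrite open_hausdorff => p q /eqP /XL_neq [a [[pa nqa]|[qa npa]]].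
    exists (phi a, ~` phi a); first by rewrite !inE.
    split; [exact: phi_open|exact: phi_openC|].
    by apply/eqP; apply/seteqP; split => // z [].
  exists (~` phi a, phi a); first by rewrite !inE.
  split; [exact: phi_openC|exact: phi_open|].
  by apply/eqP; apply/seteqP; split => // z [].
- move=> p q /eqP /XL_neq [a [[pa nqa]|[qa npa]]].
    exists (phi a); split => //; split; [exact: phi_open|exact: phi_closed].
  exists (~` phi a); split => //; apply: clopenC; split; [exact: phi_open|exact: phi_closed].
Qed.
End XLBasic.
Section XLMore.
Variable L : frame.
Implicit Types (a b c : L) (A : set L).

Lemma XL_cpt : compact [set: XL L]. Proof. by case: (@XL_stone L). Qed.
Lemma XL_G1 (W : set (XL L)) p : open W -> upset W -> W p -> exists a, proj1_sig p a /\ phi a `<=` W.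
Proof.
move=> oW uW Wp.
have := @compact_dir (XL L) (~` W) [set B | exists a, proj1_sig p a /\ B = ~` phi a].
case.
- exact: compact_closed_sub XL_cpt (open_closedC oW).
- by move=> _ [a [_ ->]]; apply: phi_openC.
- by exists (~` phi (ftop L)), (ftop L); split => //; apply: filt_top; apply: pfilt_filt (proj2_sig p).
- move=> _ _ [a [pa ->]] [b [pb ->]]; exists (~` phi (a ⊓ b)); split.
    by exists (a ⊓ b); split => //; apply: filt_meet => //; apply: pfilt_filt (proj2_sig p).
  by rewrite phi_meet => z [h|h] [].
- move=> q nWq.
  have npq : ~ (proj1_sig p `<=` proj1_sig q) by move=> pq; apply: nWq; apply: uW Wp pq.
  have [a /not_implyP [pa nqa]] : exists a, ~ (proj1_sig p a -> proj1_sig q a).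
    by apply: contrapT => /forallNP h; apply: npq => a; apply: contrapT => nq; apply: (h a) => /(_ _) /=; tauto.
  by exists (~` phi a) => //; exists a.
- move=> _ [[a [pa ->]] sa]; exists a; split => // z az.
  by apply: contrapT => /sa.
Qed.
Lemma XL_G2 A : phi (fsup A) `<=` closure (\bigcup_(a in A) phi a).
Proof.
move=> p pA B; rewrite nbhsE => -[N [oN Np] NB].
have [x [y [px npy sxy]]] := open_basic oN Np.
apply: contrapT => hne.
have le : x ⊓ fsup A ⊑ y.
  apply: meet_sup_le => a Aa; apply: phi_le; rewrite phi_meet => q [qx qa].
  apply: contrapT => nqy; apply: hne; exists q; split; first by exists a.
  by apply: NB; apply: sxy.
apply: npy; apply: filt_le le; first exact: pfilt_filt (proj2_sig p).
by apply: filt_meet => //; apply: pfilt_filt (proj2_sig p).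
Qed.
Lemma XL_G3 A : closure (\bigcup_(a in A) phi a) `<=` phi (fsup A).
Proof.
rewrite [X in _ `<=` X](closure_id _).1; last exact: phi_closed.
by apply: closureS => p [a Aa pa]; apply: phi_mono pa; apply: fsup_ub.
Qed.
Lemma XL_clopup (U : set (XL L)) : clopup U -> exists a, U = phi a.
Proof.
move=> [[oU cU] uU].
have := @compact_dir (XL L) U [set B | exists a, B = phi a /\ phi a `<=` U].
case.
- exact: compact_closed_sub XL_cpt cU.
- by move=> _ [a [-> _]]; apply: phi_open.
- by exists (phi (fbot L)), (fbot L); split => //; rewrite phi_bot.
- move=> _ _ [a [-> sa]] [b [-> sb]]; exists (phi (fjoin a b)); split.
    by exists (fjoin a b); split => //; rewrite phi_join => z [/sa|/sb].
  by rewrite phi_join.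
- move=> p Up; have [a [pa sa]] := XL_G1 oU uU Up.
  by exists (phi a) => //; exists a.
- move=> _ [[a [-> sa]] Ua]; exists a.
  by apply/seteqP; split.
Qed.
End XLMore.
Section XLDown.
Variable L : frame.
Implicit Types (a b c : L) (A : set L).

Lemma XL_downB a b : Defs.down (phi a `&` ~` phi b) = ~` phi (fimp a b) :> set (XL L).
Proof.
apply/seteqP; split.
  move=> q [r [ra nrb] qr] qi; apply: nrb.
  have fr := pfilt_filt (proj2_sig r).
  apply: filt_le (fimp_le a b) => //.
  by apply: filt_meet => //; apply: qr.
move=> q nqi.
have fq := pfilt_filt (proj2_sig q).
pose G := [set z | exists2 m, proj1_sig q m & m ⊓ a ⊑ z].
have fG : filt G.
  split.
  - by exists (ftop L); [exact: filt_top|exact: top_ub].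
  - by move=> z z' [m qm h] zz'; exists m => //; apply: le_trans zz'.
  - move=> z z' [m qm h] [m' qm' h']; exists (m ⊓ m'); first exact: filt_meet.
    apply: meet_glb'.
      by apply: le_trans h; apply: meet_mono; [apply: meet_l|apply: le_refl].
    by apply: le_trans h'; apply: meet_mono; [apply: meet_r|apply: le_refl].
have nGb : ~ G b.
  move=> [m qm h]; apply: nqi; apply: filt_le qm _ => //.
  exact: fimp_ub.
have [r [pr sr nrb]] := PFT fG nGb.
exists (exist _ r pr : XL L).
  split => /=; last exact: nrb.
  by apply: sr; exists (ftop L); [exact: filt_top|rewrite meetC meet_top; apply: le_refl].
by move=> m qm; apply: sr; exists m => //; apply: meet_l.
Qed.
Lemma down_mono (X : ordtop) (A B : set X) : A `<=` B -> Defs.down A `<=` Defs.down B.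
Proof. by move=> AB x [y Ay xy]; exists y => //; apply: AB. Qed.
Lemma down_setU (X : ordtop) (A B : set X) : Defs.down (A `|` B) = Defs.down A `|` Defs.down B.
Proof.
apply/seteqP; split => [x [y [Ay|By] xy]|x [[y Ay xy]|[y By xy]]].
- by left; exists y.
- by right; exists y.
- by exists y => //; left.
- by exists y => //; right.
Qed.
Lemma XL_down (C : set (XL L)) : clopen C -> clopen (Defs.down C).
Proof.
move=> [oC cC]; split.
  apply: open_loc => q [p Cp qp].
  have [a [b [pa npb sab]]] := open_basic oC Cp.
  exists (~` phi (fimp a b)); split.
  - exact: phi_openC.
  - by rewrite -XL_downB; exists p.
  - by rewrite -XL_downB; apply: down_mono.
have := @compact_dir (XL L) C [set V | [/\ open V, V `<=` C & closed (Defs.down V)]].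
case.
- exact: compact_closed_sub (@XL_cpt L) cC.
- by move=> V [].
- exists set0 => /=; split; [exact: open0|by []|].
  have -> : Defs.down (@set0 (XL L)) = set0 by apply/seteqP; split => // x [].
  exact: closed0.
- move=> V W [oV sV cV] [oW sW cW]; exists (V `|` W); split; last by [].
  rewrite /=; split; [exact: openU|by move=> x [/sV|/sW]|by rewrite down_setU; apply: closedU].
- move=> p Cp; have [a [b [pa npb sab]]] := open_basic oC Cp.
  exists (phi a `&` ~` phi b); last by split.
  rewrite /=; split; [by apply: openI; [exact: phi_open|exact: phi_openC]|exact: sab|].
  rewrite XL_downB; apply: open_closedC; exact: phi_open.
- move=> V [[oV sV cV] CV].
  by have -> : C = V by apply/seteqP; split.
Qed.
End XLDown.
Section XLStoneL.
Variable L : frame.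
Implicit Types (a b c : L) (A : set L).

Lemma XL_cup (W : set (XL L)) : open W -> upset W ->
  W = \bigcup_(a in [set a | phi a `<=` W]) phi a.
Proof.
move=> oW uW; apply/seteqP; split => [p Wp|p [a sa pa]]; last exact: sa.
by have [a [pa sa]] := XL_G1 oW uW Wp; exists a.
Qed.
Lemma XL_cl (W : set (XL L)) : open W -> upset W ->
  closure W = phi (fsup [set a | phi a `<=` W]).
Proof.
move=> oW uW; rewrite {1}(XL_cup oW uW).
by apply/seteqP; split; [apply: XL_G3|apply: XL_G2].
Qed.
Lemma XL_Lspace : L_space (XL L).
Proof.
split.
- split; [exact: XL_stone|exact: XL_po|].
  move=> p q npq.
  have [a /not_implyP [pa nqa]] : exists a, ~ (proj1_sig p a -> proj1_sig q a).
    by apply: contrapT => /forallNP h; apply: npq => a; apply: contrapT => nq; apply: (h a) => /(_ _) /=; tauto.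
  by exists (phi a); split => //; exact: phi_clopup.
- exact: XL_down.
- by move=> U oU uU; rewrite XL_cl //; exact: phi_open.
Qed.
Lemma XL_stoneL : stone_frame L -> stone_L_space (XL L).
Proof.
move=> sL; split; first exact: XL_Lspace.
- apply/seteqP; split => // p _; exists setT; split => //.
    by split; [exact: clopenT|by move=> ? ?].
  move=> W oW uW; rewrite XL_cl // -phi_top => /phi_le /sL.1 [T [fT sT tT]].
  move=> q _; have [t Tt qt] := pfilt_fin (proj2_sig q) fT (filt_le (pfilt_filt (proj2_sig q)) (filt_top (pfilt_filt (proj2_sig q))) tT).
  exact: sT Tt q qt.
- move=> U cU; have [a ->] := XL_clopup cU.
  rewrite {1}(sL.2 a).
  apply: subset_trans (XL_G2 (A:=[set c | complemented c /\ c ⊑ a])) _; apply: closureS.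
  move=> p [c [hc ca] pc]; exists (phi c); split => //.
  + exact: (phi_clopup c).1.
  + split; first by move=> x y xc xy; apply: xy.
    move=> x y yc xy; apply: contrapT => nxc.
    have [//|xc'] := pfilt_compl (proj2_sig x) hc.
    apply: (pfilt_compl_not (proj2_sig y) yc); exact: xy.
  + exact: phi_mono.
Qed.
End XLStoneL.
Section XLIso.
Variable L : frame.
Variable hL : L_space (XL L).
Implicit Types (a b c : L) (A : set L).

Definition phiC a : CUfr hL := exist _ (phi a) (phi_clopup a).
Lemma phi_sup A : phi (fsup A) = closure (\bigcup_(a in A) phi a).
Proof. by apply/seteqP; split; [apply: XL_G2|apply: XL_G3]. Qed.
Lemma phiC_hom : frame_hom phiC.
Proof.
split.
- apply: sig_eq; change (phi (ftop L) = proj1_sig (ftop (CUfr hL))).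
  by rewrite phi_top CU_top.
- by move=> a b; apply: sig_eq; rewrite /= phi_meet.
- move=> S; apply: sig_eq.
  change (phi (fsup S) = closure (\bigcup_(U in phiC @` S) proj1_sig U)).
  rewrite phi_sup; congr closure; apply/seteqP; split.
    by move=> p [s Ss ps]; exists (phiC s) => //; exists s.
  by move=> p [_ [s Ss <-] ps]; exists s.
Qed.
Definition psiC (U : CUfr hL) : L := fsup [set a | phi a `<=` proj1_sig U].
Lemma phiC_psiC U : phiC (psiC U) = U.
Proof.
apply: sig_eq => /=; have [a0 e] := XL_clopup (proj2_sig U).
rewrite e; apply/seteqP; split.
  apply: phi_mono; apply: fsup_least => b /=; rewrite e; exact: phi_le.
by apply: phi_mono; apply: fsup_ub => /=; rewrite e.
Qed.
Lemma psiC_phiC a : psiC (phiC a) = a.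
Proof.
apply: le_anti; last by apply: fsup_ub.
by apply: fsup_least => b /= /phi_le.
Qed.
Lemma psiC_hom : frame_hom psiC.
Proof. exact: frame_hom_inv phiC_hom psiC_phiC phiC_psiC. Qed.
End XLIso.
Lemma KF_es (d : ob (op_category StoneFrm)) :
  exists c (u : hom (op_category StoneFrm) (KF c) d) (v : hom (op_category StoneFrm) d (KF c)),
  v \oc u = idm (KF c) /\ u \oc v = idm d.
Proof.
case: d => L sL.
exists (exist stone_L_space (XL L) (XL_stoneL sL) : ob StoneLPries).
exists (exist _ (@phiC L (LofSL (XL_stoneL sL))) (phiC_hom _)).
exists (exist _ (@psiC L (LofSL (XL_stoneL sL))) (psiC_hom _)).
split; apply: sig_eq; apply: funext => x /=.
  exact: phiC_psiC.
exact: psiC_phiC.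
Qed.
Lemma StoneL_dual : equivalent StoneLPries (op_category StoneFrm).
Proof. exact: ff_es_equiv KF_faithful KF_full KF_es. Qed.
Theorem corollary5p19 :
  equivalent StoneLPries Stone /\ dually_equivalent StoneLPries StoneFrm.
Proof.
split; last exact: StoneL_dual.
exact: equiv_trans StoneL_dual (equiv_sym Stone_dual).
Qed.
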